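(* Let $\ell(c)$ be a Banach function space of real sequences with $\ell^1\subset\ell(c)\subset\ell^0$ having the Fatou property, and let $M=(a_{ij})$ be an infinite real matrix whose columns $C_j=(a_{ij})_i$ are nonzero, satisfy $C_j\in\ell(c)$ for all $j$, and $\sup_j\|C_j\|_{\ell(c)}<\infty$ (so that $M$ defines a continuous linear operator $M\colon\ell^1\to\ell(c)$, $Mx=(\sum_ja_{ij}x_j)_i$). Let $p>1$. The following are equivalent: (a) $M$ defines a continuous linear operator $M\colon\ell^p\to\ell(c)$, i.e. for every $x\in\ell^p$ the series $\sum_ja_{ij}x_j$ converge for all $i$, $Mx\in\ell(c)$, and $x\mapsto Mx$ is bounded from $\ell^p$ to $\ell(c)$; (b) $M\colon\ell^1\to\ell(c)$ is $\frac1p$-th power factorable with a continuous extension, i.e. it admits a continuous linear extension $\ell^p\to\ell(c)$; (c) $\ell^p\subset\ell^1(m_M)$; (d) $\ell^1\subset\ell^{1/p}(m_M)\cap\ell^1(m_M)$; (e) there exists $C>0$ such that $\big\|\sum_{j\in F}x_jC_j\big\|_{\ell(c)}\le C\big(\sum_{j\in F}x_j^p\big)^{1/p}$ for all finite $F\subset\mathbb N$ and all $(x_j)_{j\in F}\subset[0,\infty)$.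
   Context: $\ell^0$ is the space of all real sequences. A Banach function space of sequences $\ell(c)\subset\ell^0$ is a vector subspace, solid under the coordinatewise order, complete under a norm monotone for that order. Fatou property: if $(x^k)\subset\ell(c)$, $0\le x^k\uparrow x$ pointwise and $\sup_k\|x^k\|<\infty$, then $x\in\ell(c)$ and $\|x^k\|\uparrow\|x\|$. $\mathcal P_F(\mathbb N)$ is the $\delta$-ring of finite subsets of $\mathbb N$; $m_M\colon\mathcal P_F(\mathbb N)\to\ell(c)$, $m_M(A)=M\chi_A=\sum_{j\in A}C_j$, is a vector measure whose only null set is $\emptyset$. For $x^*\in\ell(c)^*$, $|x^*m_M|$ is the variation of $x^*\circ m_M$ on $\mathcal P(\mathbb N)$. $\ell^1(m_M)$ is the set of $x\in\ell^0$ with $x\in L^1(|x^*m_M|)$ for every $x^*\in\ell(c)^*$ and such that for each $A\subset\mathbb N$ there is $\int_Ax\,dm_M\in\ell(c)$ with $x^*(\int_Ax\,dm_M)=\int_Ax\,dx^*m_M$ for all $x^*$. For $r\in(0,\infty)$, $\ell^r(m_M)=\{x\in\ell^0:|x|^r\in\ell^1(m_M)\}$. *)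

(* Defs.v *)
From Stdlib Require Import Reals List.
From Coquelicot Require Import Coquelicot.
Open Scope R_scope.

(** Sequences are [nat -> R]; an infinite matrix is [a : nat -> nat -> R],
    with [a i j] the entry in row i, column j. *)
Definition seqR := nat -> R.

Definition seq_add (x y : seqR) : seqR := fun i => x i + y i.
Definition seq_scal (c : R) (x : seqR) : seqR := fun i => c * x i.
Definition seq_zero : seqR := fun _ => 0.

(** Power a^r for a >= 0 with the convention 0^r = 0 (r > 0). *)
Definition rp (a r : R) : R := if Rle_dec a 0 then 0 else Rpower a r.

Definition in_l1 (x : seqR) : Prop := ex_series (fun j => Rabs (x j)).
Definition in_lp (p : R) (x : seqR) : Prop :=
  ex_series (fun j => rp (Rabs (x j)) p).
Definition lp_norm (p : R) (x : seqR) : R :=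
  rp (Series (fun j => rp (Rabs (x j)) p)) (/ p).

Definition is_BFS (L : seqR -> Prop) (N : seqR -> R) : Prop :=
  L seq_zero /\
  (forall x y, L x -> L y -> L (seq_add x y)) /\
  (forall c x, L x -> L (seq_scal c x)) /\
  (forall x, L x -> 0 <= N x) /\
  (forall x, L x -> N x = 0 -> forall i, x i = 0) /\
  (forall c x, L x -> N (seq_scal c x) = Rabs c * N x) /\
  (forall x y, L x -> L y -> N (seq_add x y) <= N x + N y) /\
  (forall x y, L x -> (forall i, Rabs (y i) <= Rabs (x i)) -> L y /\ N y <= N x) /\
  (forall u : nat -> seqR, (forall n, L (u n)) ->
     (forall eps, 0 < eps -> exists n0, forall m n, (n0 <= m)%nat -> (n0 <= n)%nat ->
        N (seq_add (u m) (seq_scal (-1) (u n))) < eps) ->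
     exists x, L x /\ forall eps, 0 < eps -> exists n0, forall n, (n0 <= n)%nat ->
        N (seq_add (u n) (seq_scal (-1) x)) < eps).

Definition Fatou (L : seqR -> Prop) (N : seqR -> R) : Prop :=
  forall (u : nat -> seqR) (x : seqR),
    (forall k, L (u k)) ->
    (forall k i, 0 <= u k i /\ u k i <= u (S k) i) ->
    (forall i, is_lim_seq (fun k => u k i) (x i)) ->
    (exists B, forall k, N (u k) <= B) ->
    L x /\ is_lim_seq (fun k => N (u k)) (N x).

(** Elements of the (topological) dual l(c)^*: continuous linear functionals
    on L (only their values on L matter). *)
Definition in_dual (L : seqR -> Prop) (N : seqR -> R) (phi : seqR -> R) : Prop :=
  (forall x y, L x -> L y -> phi (seq_add x y) = phi x + phi y) /\
  (forall c x, L x -> phi (seq_scal c x) = c * phi x) /\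
  (exists K, forall x, L x -> Rabs (phi x) <= K * N x).

Definition col (a : nat -> nat -> R) (j : nat) : seqR := fun i => a i j.

Definition Mapp (a : nat -> nat -> R) (x : seqR) : seqR :=
  fun i => Series (fun j => a i j * x j).

(** For x^* in the dual, x^* o m_M is the scalar measure with atoms
    (x^* o m_M)({j}) = x^*(C_j); its variation on P(N) is
    |x^* m_M|(A) = sum_{j in A} |x^*(C_j)|.  Hence x in L^1(|x^* m_M|) iff
    sum_j |x_j| |x^*(C_j)| < oo, and int_A x d(x^* m_M) = sum_{j in A} x_j x^*(C_j). *)
Definition int_scalar (a : nat -> nat -> R) (phi : seqR -> R) (A : nat -> bool)
  (x : seqR) : R :=
  Series (fun j => if A j then x j * phi (col a j) else 0).

Definition in_l1m (L : seqR -> Prop) (N : seqR -> R) (a : nat -> nat -> R)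
  (x : seqR) : Prop :=
  (forall phi, in_dual L N phi ->
     ex_series (fun j => Rabs (x j) * Rabs (phi (col a j)))) /\
  (forall A : nat -> bool, exists v, L v /\
     forall phi, in_dual L N phi -> phi v = int_scalar a phi A x).

Definition in_lrm (L : seqR -> Prop) (N : seqR -> R) (a : nat -> nat -> R)
  (r : R) (x : seqR) : Prop :=
  in_l1m L N a (fun j => rp (Rabs (x j)) r).

Definition fin_comb (a : nat -> nat -> R) (F : list nat) (x : seqR) : seqR :=
  fun i => fold_right (fun j acc => x j * a i j + acc) 0 F.
Definition fin_sum (F : list nat) (f : nat -> R) : R :=
  fold_right (fun j acc => f j + acc) 0 F.

(* Main.v *)
Require Import Defs.
From Stdlib Require Import Reals List Lra Lia Arith.
From Stdlib Require Import Classical ClassicalEpsilon FunctionalExtensionality.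
From Coquelicot Require Import Coquelicot.
Open Scope R_scope.

Fixpoint psum (f : nat -> R) (n : nat) : R :=
  match n with O => 0 | S n => psum f n + f n end.

Lemma psum_S f n : psum f (S n) = psum f n + f n.
Proof. reflexivity. Qed.

Lemma psum_ext f g n : (forall j, (j < n)%nat -> f j = g j) -> psum f n = psum g n.
Proof. induction n; intros H; simpl; auto. rewrite IHn, H; auto. Qed.

Lemma psum_le f g n : (forall j, (j < n)%nat -> f j <= g j) -> psum f n <= psum g n.
Proof. induction n; intros H; simpl. lra. pose proof (H n (Nat.lt_succ_diag_r n)).
 assert (psum f n <= psum g n) by (apply IHn; intros; apply H; lia). lra. Qed.

Lemma psum_nonneg f n : (forall j, 0 <= f j) -> 0 <= psum f n.
Proof. induction n; intros H; simpl. lra. pose proof (H n). specialize (IHn H). lra. Qed.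

Lemma psum_mono f n m : (forall j, 0 <= f j) -> (n <= m)%nat -> psum f n <= psum f m.
Proof. intros H Hnm. induction Hnm. lra. simpl. specialize (H m). lra. Qed.

Lemma psum_plus f g n : psum (fun j => f j + g j) n = psum f n + psum g n.
Proof. induction n; simpl; lra. Qed.

Lemma psum_scal c f n : psum (fun j => c * f j) n = c * psum f n.
Proof. induction n; simpl. ring. rewrite IHn. ring. Qed.

Lemma psum_zero f n : (forall j, (j < n)%nat -> f j = 0) -> psum f n = 0.
Proof. induction n; intros H; simpl; auto. rewrite IHn, H; try lra; auto. Qed.

Lemma psum_tail f n m : (forall j, (n <= j)%nat -> f j = 0) -> (n <= m)%nat -> psum f m = psum f n.
Proof. intros H Hnm. induction Hnm as [|m Hnm IH]; auto. simpl. rewrite IH, H. ring. lia. Qed.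

Lemma psum_abs f n : Rabs (psum f n) <= psum (fun j => Rabs (f j)) n.
Proof. induction n; simpl. rewrite Rabs_R0; lra.
 eapply Rle_trans. apply Rabs_triang. lra. Qed.

Lemma sum_n_psum f n : sum_n f n = psum f (S n).
Proof. induction n. rewrite sum_O. simpl. rewrite Rplus_0_l. reflexivity.
 rewrite sum_Sn, IHn. reflexivity. Qed.

Lemma is_series_psum f l : is_series f l <-> is_lim_seq (psum f) l.
Proof. split; intro H.
 - apply is_lim_seq_incr_1. apply (is_lim_seq_ext (sum_n f)). intros; apply sum_n_psum. exact H.
 - apply is_lim_seq_incr_1 in H. change (is_lim_seq (sum_n f) l).
   apply (is_lim_seq_ext (fun n => psum f (S n))). intros; symmetry; apply sum_n_psum. exact H.
Qed.

Lemma series_fin f n : (forall j, (n <= j)%nat -> f j = 0) -> is_series f (psum f n).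
Proof. intros H. apply is_series_psum. apply is_lim_seq_ext_loc with (fun _ => psum f n).
 exists n. intros m Hm. symmetry; apply psum_tail; auto. apply is_lim_seq_const. Qed.

Lemma Series_fin f n : (forall j, (n <= j)%nat -> f j = 0) -> Series f = psum f n.
Proof. intros H. apply is_series_unique, series_fin, H. Qed.

Lemma ex_series_bounded f B : (forall j, 0 <= f j) -> (forall n, psum f n <= B) -> ex_series f.
Proof. intros H0 HB.
 assert (Hi : forall n, psum f n <= psum f (S n)) by (intros; apply psum_mono; auto).
 destruct (ex_lim_seq_incr _ Hi) as [l Hl].
 assert (Hle : Rbar_le l B).
 { apply (is_lim_seq_le (psum f) (fun _ => B) l B); auto. apply is_lim_seq_const. }
 assert (Hge : Rbar_le 0 l).
 { apply (is_lim_seq_le (fun _ => 0) (psum f) 0 l); auto. intros; apply psum_nonneg; auto. apply is_lim_seq_const. }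
 destruct l as [l| |]; simpl in *; try contradiction.
 exists l. apply is_series_psum. exact Hl. Qed.

Lemma psum_le_Series f n : (forall j, 0 <= f j) -> ex_series f -> psum f n <= Series f.
Proof. intros H0 [l Hl]. rewrite (is_series_unique _ _ Hl). apply is_series_psum in Hl.
 apply is_lim_seq_incr_compare; auto. intros; apply psum_mono; auto. Qed.

Lemma Series_le_bound f B : (forall n, psum f n <= B) -> ex_series f -> Series f <= B.
Proof. intros HB [l Hl]. rewrite (is_series_unique _ _ Hl). apply is_series_psum in Hl.
 assert (Rbar_le l B). apply (is_lim_seq_le (psum f) (fun _ => B) l B); auto. apply is_lim_seq_const.
 exact H. Qed.

Lemma Series_nonneg f : (forall j, 0 <= f j) -> ex_series f -> 0 <= Series f.
Proof. intros. eapply Rle_trans. apply (psum_nonneg f 0); auto. apply psum_le_Series; auto. Qed.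

Lemma fin_sum_app l1 l2 f : fin_sum (l1 ++ l2) f = fin_sum l1 f + fin_sum l2 f.
Proof. induction l1; simpl. ring. unfold fin_sum in *. simpl. rewrite IHl1. ring. Qed.

Lemma fin_sum_seq0 f m : fin_sum (seq 0 m) f = psum f m.
Proof. induction m. reflexivity. rewrite seq_S, fin_sum_app, IHm. simpl. unfold fin_sum; simpl. ring. Qed.

Lemma psum_minus f g n : psum (fun j => f j - g j) n = psum f n - psum g n.
Proof. induction n; simpl; lra. Qed.

Lemma is_series_extR (a b : nat -> R) (l : R) : (forall n, a n = b n) -> is_series a l -> is_series b l.
Proof. intros. apply (is_series_ext a b l); auto. Qed.

Lemma ex_series_extR (a b : nat -> R) : (forall n, a n = b n) -> ex_series a -> ex_series b.
Proof. intros H [l Hl]. exists l. apply is_series_extR with a; auto. Qed.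

Lemma ex_series_scalR (c : R) (a : nat -> R) : ex_series a -> ex_series (fun n => c * a n).
Proof. intros [l Hl]. exists (c * l). apply (is_series_scal_l c a l Hl). Qed.

Lemma ex_series_leR (a b : nat -> R) : (forall n, 0 <= a n <= b n) -> ex_series b -> ex_series a.
Proof. intros H Hb. apply (ex_series_le (V := R_CompleteNormedModule)) with b; auto.
 intros n. change (Rabs (a n) <= b n). rewrite Rabs_right by (apply Rle_ge, H). apply H. Qed.

Lemma rp_nonneg a r : 0 <= rp a r.
Proof. unfold rp. destruct (Rle_dec a 0). lra. unfold Rpower. left; apply exp_pos. Qed.

Lemma rp_zero r : rp 0 r = 0.
Proof. unfold rp. destruct (Rle_dec 0 0); lra. Qed.

Lemma rp_pos a r : 0 < a -> rp a r = Rpower a r.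
Proof. intros. unfold rp. destruct (Rle_dec a 0); [lra|auto]. Qed.

Lemma rp_pos_lt a r : 0 < a -> 0 < rp a r.
Proof. intros. rewrite rp_pos; auto. unfold Rpower; apply exp_pos. Qed.

Lemma rp_mono a b r : 0 < r -> 0 <= a <= b -> rp a r <= rp b r.
Proof. intros Hr [Ha Hab]. destruct (Req_dec a 0). subst. rewrite rp_zero. apply rp_nonneg.
 rewrite !rp_pos by lra. apply Rle_Rpower_l; lra. Qed.

Lemma rp_inv a r : 0 < r -> 0 <= a -> rp (rp a r) (/ r) = a.
Proof. intros Hr Ha. destruct (Req_dec a 0). subst. rewrite !rp_zero. auto.
 rewrite (rp_pos a) by lra. rewrite rp_pos. rewrite Rpower_mult. rewrite Rinv_r by lra.
 apply Rpower_1; lra. unfold Rpower; apply exp_pos. Qed.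

Lemma rp_inv' a r : 0 < r -> 0 <= a -> rp (rp a (/ r)) r = a.
Proof. intros Hr Ha. rewrite <- (Rinv_inv r) at 2. apply rp_inv; auto. apply Rinv_0_lt_compat; auto. Qed.

Lemma rp_mul a b r : 0 <= a -> 0 <= b -> rp (a * b) r = rp a r * rp b r.
Proof. intros Ha Hb. destruct (Req_dec a 0). subst. rewrite Rmult_0_l, !rp_zero. ring.
 destruct (Req_dec b 0). subst. rewrite Rmult_0_r, !rp_zero. ring.
 rewrite !rp_pos by nra. rewrite Rpower_mult_distr by lra. auto. Qed.

Lemma rp_one r : rp 1 r = 1.
Proof. rewrite rp_pos by lra. unfold Rpower. rewrite ln_1, Rmult_0_r. apply exp_0. Qed.

Lemma rp_eq0 a r : 0 <= a -> rp a r = 0 -> a = 0.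
Proof. intros Ha H. destruct (Req_dec a 0); auto. pose proof (rp_pos_lt a r). lra. Qed.

Lemma rp_strict a b r : 0 < r -> 0 <= a < b -> rp a r < rp b r.
Proof. intros Hr [Ha Hab]. destruct (Req_dec a 0). subst. rewrite rp_zero. apply rp_pos_lt; lra.
 rewrite !rp_pos by lra. apply Rlt_Rpower_l; lra. Qed.

Lemma rp_le_inv a b r : 0 < r -> 0 <= a -> 0 <= b -> rp a r <= rp b r -> a <= b.
Proof. intros Hr Ha Hb H. destruct (Rle_lt_dec a b); auto. pose proof (rp_strict b a r Hr (conj Hb r0)). lra. Qed.

Lemma rp_le_root a S r : 0 < r -> 0 <= a -> 0 <= S -> rp a r <= S -> a <= rp S (/ r).
Proof. intros Hr Ha HS H. apply (rp_le_inv _ _ r); auto. apply rp_nonneg. rewrite rp_inv'; auto. Qed.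

Lemma rp_le_self a r : 1 <= r -> 0 <= a <= 1 -> rp a r <= a.
Proof. intros Hr [Ha Ha1]. destruct (Req_dec a 0). subst; rewrite rp_zero; lra.
 rewrite rp_pos by lra. replace a with (Rpower a 1) at 2 by (apply Rpower_1; lra).
 unfold Rpower. assert (ln a <= 0). { rewrite <- ln_1. apply ln_le; lra. }
 destruct (Req_dec (r * ln a) (1 * ln a)) as [E|E]. rewrite E; lra. left; apply exp_increasing. nra. Qed.

Definition ee (i : nat) : seqR := fun k => if Nat.eq_dec k i then 1 else 0.
Definition WW (r : nat) (y : seqR) : seqR := fun i => if lt_dec i r then y i else 0.
Definition seq_abs (y : seqR) : seqR := fun i => Rabs (y i).

Section BFS.
Variables (L : seqR -> Prop) (N : seqR -> R).
Hypothesis HBFS : is_BFS L N.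
Hypothesis Hl1 : forall x, in_l1 x -> L x.

Lemma L_zero : L seq_zero. Proof. apply HBFS. Qed.
Lemma L_add x y : L x -> L y -> L (seq_add x y). Proof. apply HBFS. Qed.
Lemma L_scal c x : L x -> L (seq_scal c x). Proof. apply HBFS. Qed.
Lemma N_nonneg x : L x -> 0 <= N x. Proof. apply HBFS. Qed.
Lemma N_def x : L x -> N x = 0 -> forall i, x i = 0. Proof. apply HBFS. Qed.
Lemma N_scal c x : L x -> N (seq_scal c x) = Rabs c * N x. Proof. apply HBFS. Qed.
Lemma N_tri x y : L x -> L y -> N (seq_add x y) <= N x + N y. Proof. apply HBFS. Qed.
Lemma L_solid x y : L x -> (forall i, Rabs (y i) <= Rabs (x i)) -> L y.
Proof. intros. apply HBFS with x; auto. Qed.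
Lemma N_solid x y : L x -> (forall i, Rabs (y i) <= Rabs (x i)) -> N y <= N x.
Proof. intros. apply HBFS; auto. Qed.

Lemma N_zero : N seq_zero = 0.
Proof. replace seq_zero with (seq_scal 0 seq_zero).
 rewrite N_scal. rewrite Rabs_R0; ring. apply L_zero.
 apply functional_extensionality; intro; unfold seq_scal, seq_zero; ring. Qed.

Lemma N_ext x y : L x -> (forall i, Rabs (y i) = Rabs (x i)) -> N y = N x.
Proof. intros Hx H. assert (L y) by (apply L_solid with x; auto; intros; rewrite H; lra).
 apply Rle_antisym; apply N_solid; auto; intros; rewrite H; lra. Qed.

Lemma L_sub x y : L x -> L y -> L (seq_add x (seq_scal (-1) y)).
Proof. intros; apply L_add; auto; apply L_scal; auto. Qed.

Lemma N_sub_tri x y : L x -> L y -> N (seq_add x (seq_scal (-1) y)) <= N x + N y.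
Proof. intros. eapply Rle_trans. apply N_tri; auto. apply L_scal; auto.
 rewrite N_scal; auto. replace (Rabs (-1)) with 1. lra. rewrite Rabs_left by lra. lra. Qed.

Lemma ee_l1 i : in_l1 (ee i).
Proof. exists (psum (fun j => Rabs (ee i j)) (S i)). apply series_fin.
 intros j Hj. unfold ee. destruct (Nat.eq_dec j i). lia. apply Rabs_R0. Qed.

Lemma ee_L i : L (ee i). Proof. apply Hl1, ee_l1. Qed.

Lemma Ne_pos i : 0 < N (ee i).
Proof. destruct (N_nonneg (ee i) (ee_L i)); auto.
 pose proof (N_def (ee i) (ee_L i) (eq_sym H) i). unfold ee in H0.
 destruct (Nat.eq_dec i i); [lra | congruence]. Qed.

Lemma coord_bound y i : L y -> Rabs (y i) * N (ee i) <= N y.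
Proof. intros Hy. rewrite <- N_scal by apply ee_L. apply N_solid; auto.
 intros k. unfold seq_scal, ee. destruct (Nat.eq_dec k i). subst. rewrite Rmult_1_r. lra.
 rewrite Rmult_0_r, Rabs_R0. apply Rabs_pos. Qed.

Lemma coord_bound' y i : L y -> Rabs (y i) <= N y / N (ee i).
Proof. intros Hy. pose proof (coord_bound y i Hy). pose proof (Ne_pos i).
 apply Rmult_le_reg_r with (N (ee i)); auto. unfold Rdiv. rewrite Rmult_assoc, Rinv_l; lra. Qed.

Lemma L_abs y : L y -> L (seq_abs y).
Proof. intros. apply L_solid with y; auto. intros; unfold seq_abs; rewrite Rabs_Rabsolu; lra. Qed.

Lemma N_abs y : L y -> N (seq_abs y) = N y.
Proof. intros. apply N_ext; auto. intros; unfold seq_abs; rewrite Rabs_Rabsolu; auto. Qed.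

Lemma WW_S r y : WW (S r) y = seq_add (WW r y) (seq_scal (y r) (ee r)).
Proof. apply functional_extensionality; intro i. unfold WW, seq_add, seq_scal, ee.
 destruct (lt_dec i (S r)), (lt_dec i r), (Nat.eq_dec i r); subst; try lia; try ring. Qed.

Lemma WW_0 y : WW 0 y = seq_zero.
Proof. apply functional_extensionality; intro i. unfold WW. destruct (lt_dec i 0); [lia|auto]. Qed.

Lemma WW_L r y : L (WW r y).
Proof. induction r. rewrite WW_0; apply L_zero. rewrite WW_S. apply L_add; auto. apply L_scal, ee_L. Qed.

Lemma N_WW_le r y : N (WW r y) <= psum (fun i => Rabs (y i) * N (ee i)) r.
Proof. induction r. rewrite WW_0, N_zero. simpl; lra.
 rewrite WW_S. eapply Rle_trans. apply N_tri. apply WW_L. apply L_scal, ee_L.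
 rewrite N_scal by apply ee_L. simpl. lra. Qed.

Lemma N_WW_L r y : L y -> N (WW r y) <= N y.
Proof. intros. apply N_solid; auto. intros i; unfold WW. destruct (lt_dec i r). lra. rewrite Rabs_R0; apply Rabs_pos. Qed.

Lemma N_WW_mono r r' y : (r <= r')%nat -> N (WW r y) <= N (WW r' y).
Proof. intros. apply N_solid. apply WW_L. intros i; unfold WW. destruct (lt_dec i r), (lt_dec i r'); try lia; try lra.
 rewrite Rabs_R0; apply Rabs_pos. Qed.

Lemma N_WW_lim (HF : Fatou L N) y eps : L y -> 0 < eps -> exists r, N y - eps < N (WW r y).
Proof. intros Hy He.
 destruct (HF (fun r => WW r (seq_abs y)) (seq_abs y)) as [_ Hlim].
 - intros; apply WW_L.
 - intros k i. unfold WW, seq_abs. destruct (lt_dec i k), (lt_dec i (S k)); try lia; split; try apply Rabs_pos; try lra.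
 - intros i. apply is_lim_seq_ext_loc with (fun _ => seq_abs y i). exists (S i). intros n Hn.
   unfold WW. destruct (lt_dec i n); auto; lia. apply is_lim_seq_const.
 - exists (N y). intros k. rewrite <- (N_abs y Hy). apply N_WW_L. apply L_abs; auto.
 - rewrite (N_abs y Hy) in Hlim. apply is_lim_seq_spec in Hlim. destruct (Hlim (mkposreal eps He)) as [r Hr].
   exists r. specialize (Hr r (le_n r)). simpl in Hr.
   assert (N (WW r (seq_abs y)) = N (WW r y)).
   { apply N_ext. apply WW_L. intros i. unfold WW, seq_abs. destruct (lt_dec i r); auto. rewrite Rabs_Rabsolu; auto. }
   apply Rabs_def2 in Hr. lra. Qed.

End BFS.

Lemma unif_finite (u : nat -> seqR) (y : seqR) :
  (forall i, is_lim_seq (fun n => u n i) (y i)) ->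
  forall k eps, 0 < eps -> exists M, forall m, (M <= m)%nat -> forall i, (i < k)%nat -> Rabs (u m i - y i) < eps.
Proof. intros H k eps He. induction k.
 - exists O. intros; lia.
 - destruct IHk as [M1 HM1]. pose proof (H k) as Hk. apply is_lim_seq_spec in Hk.
   destruct (Hk (mkposreal eps He)) as [M2 HM2]. exists (max M1 M2). intros m Hm i Hi.
   destruct (Nat.eq_dec i k). subst. apply HM2. lia. apply HM1; lia. Qed.

Lemma lim_inv_S : is_lim_seq (fun k => / INR (S k)) 0.
Proof. assert (H : is_lim_seq (fun k => INR (S k)) p_infty).
 { apply (is_lim_seq_incr_1 INR). apply is_lim_seq_INR. }
 apply (is_lim_seq_inv _ _ H). discriminate. Qed.

Section LSC.
Variables (L : seqR -> Prop) (N : seqR -> R).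
Hypothesis HBFS : is_BFS L N.
Hypothesis HF : Fatou L N.

Lemma fatou_lsc (u : nat -> seqR) (y : seqR) K :
  (forall n, L (u n)) -> (forall i, is_lim_seq (fun n => u n i) (y i)) ->
  (forall n, N (u n) <= K) -> L y /\ N y <= K.
Proof. intros HL Hlim HK.
 assert (Hm : forall k, exists M, forall i, (i < k)%nat -> Rabs (u M i - y i) < / INR (S k)).
 { intros k. destruct (unif_finite u y Hlim k (/ INR (S k))) as [M HM].
   apply Rinv_0_lt_compat, lt_0_INR; lia. exists M. apply HM. lia. }
 apply choice in Hm. destruct Hm as [mk Hmk].
 set (v := fun k i => if lt_dec i k then Rmax 0 (Rabs (y i) - / INR (S k)) else 0).
 assert (Hv : forall k i, Rabs (v k i) <= Rabs (u (mk k) i)).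
 { intros k i. unfold v. destruct (lt_dec i k). 
   - specialize (Hmk k i l). apply Rabs_def2 in Hmk. rewrite Rabs_right by (apply Rle_ge, Rmax_l).
     apply Rmax_lub. apply Rabs_pos. pose proof (Rabs_triang_inv (y i) (u (mk k) i)).
     rewrite Rabs_minus_sym in H. 
     assert (Rabs (y i - u (mk k) i) = Rabs (u (mk k) i - y i)) by apply Rabs_minus_sym.
     pose proof (Rabs_triang (u (mk k) i) (y i - u (mk k) i)). replace (u (mk k) i + (y i - u (mk k) i)) with (y i) in H1 by ring.
     assert (Rabs (u (mk k) i - y i) < / INR (S k)). apply Rabs_def1; lra. lra.
   - rewrite Rabs_R0; apply Rabs_pos. }
 assert (HvL : forall k, L (v k)) by (intros; apply (L_solid L N HBFS (u (mk k))); auto).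
 assert (Hinv : forall k, / INR (S (S k)) <= / INR (S k)).
 { intros. apply Rinv_le_contravar. apply lt_0_INR; lia. apply le_INR; lia. }
 destruct (HF v (seq_abs y)) as [Hy Hl]; auto.
 - intros k i. unfold v. pose proof (Hinv k). destruct (lt_dec i k), (lt_dec i (S k)); try lia; split; try apply Rmax_l; try lra.
   apply Rle_max_compat_l. lra.
 - intros i. apply is_lim_seq_ext_loc with (fun k => Rmax 0 (Rabs (y i) - / INR (S k))).
   exists (S i). intros n Hn. unfold v. destruct (lt_dec i n); auto; lia.
   unfold seq_abs. apply is_lim_seq_le_le with (fun k => Rabs (y i) - / INR (S k)) (fun _ => Rabs (y i)).
   intros k. pose proof (Rinv_0_lt_compat (INR (S k)) (lt_0_INR (S k) (Nat.lt_0_succ k))). split. apply Rmax_r.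
   apply Rmax_lub. apply Rabs_pos. lra.
   replace (Finite (Rabs (y i))) with (Finite (Rabs (y i) - 0)) by (f_equal; ring).
   apply is_lim_seq_minus'. apply is_lim_seq_const. apply lim_inv_S. apply is_lim_seq_const.
 - exists K. intros k. eapply Rle_trans. apply (N_solid L N HBFS (u (mk k))); auto. auto.
 - assert (Hly : L y) by (apply (L_solid L N HBFS (seq_abs y)); auto; intros; unfold seq_abs; rewrite Rabs_Rabsolu; lra).
   split; auto. rewrite <- (N_abs L N HBFS y Hly).
   assert (Rbar_le (N (seq_abs y)) K). apply (is_lim_seq_le (fun k => N (v k)) (fun _ => K)); auto.
   intros k. eapply Rle_trans. apply (N_solid L N HBFS (u (mk k))); auto. auto. apply is_lim_seq_const. exact H.
Qed.
End LSC.

Definition Tm (a : nat -> nat -> R) (m : nat) (z : seqR) : seqR := fin_comb a (seq 0 m) z.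
Definition pnorm (p : R) (m : nat) (z : seqR) : R := rp (psum (fun j => rp (z j) p) m) (/ p).

Lemma Tm_apply a m z i : Tm a m z i = psum (fun j => z j * a i j) m.
Proof. unfold Tm. change (fin_sum (seq 0 m) (fun j => z j * a i j) = psum (fun j => z j * a i j) m).
 apply fin_sum_seq0. Qed.

Lemma Tm_ext a m z w : (forall j, (j < m)%nat -> z j = w j) -> Tm a m z = Tm a m w.
Proof. intros H. apply functional_extensionality; intro i. rewrite !Tm_apply. apply psum_ext.
 intros; rewrite H; auto. Qed.

Lemma Tm_tail a n m z : (forall j, (n <= j)%nat -> z j = 0) -> (n <= m)%nat -> Tm a m z = Tm a n z.
Proof. intros H Hnm. apply functional_extensionality; intro i. rewrite !Tm_apply. apply psum_tail; auto.
 intros; rewrite H; auto; ring. Qed.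

Lemma Tm_add a m z w : Tm a m (fun j => z j + w j) = seq_add (Tm a m z) (Tm a m w).
Proof. apply functional_extensionality; intro i. unfold seq_add. rewrite !Tm_apply. rewrite <- psum_plus.
 apply psum_ext; intros; ring. Qed.

Lemma Tm_scal a m c z : Tm a m (fun j => c * z j) = seq_scal c (Tm a m z).
Proof. apply functional_extensionality; intro i. unfold seq_scal. rewrite !Tm_apply. rewrite <- psum_scal.
 apply psum_ext; intros; ring. Qed.

Lemma Mapp_fin a m z : (forall j, (m <= j)%nat -> z j = 0) -> Mapp a z = Tm a m z.
Proof. intros H. apply functional_extensionality; intro i. unfold Mapp. rewrite Tm_apply.
 rewrite (Series_fin _ m). apply psum_ext; intros; ring. intros; rewrite H; auto; ring. Qed.

Lemma pnorm_nonneg p m z : 0 <= pnorm p m z.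
Proof. apply rp_nonneg. Qed.

Lemma coord_le_pnorm p m z j : 0 < p -> (forall k, 0 <= z k) -> (j < m)%nat -> z j <= pnorm p m z.
Proof. intros Hp Hz Hj. apply rp_le_root; auto. apply psum_nonneg; intros; apply rp_nonneg.
 clear -Hj. induction Hj; simpl. pose proof (psum_nonneg (fun j => rp (z j) p) j (fun k => rp_nonneg _ _)). lra.
 pose proof (rp_nonneg (z m) p). lra. Qed.

Section MAT.
Variables (L : seqR -> Prop) (N : seqR -> R) (a : nat -> nat -> R) (p : R).
Hypothesis HBFS : is_BFS L N.
Hypothesis HF : Fatou L N.
Hypothesis Hl1 : forall x, in_l1 x -> L x.
Hypothesis Hcol : forall j, L (col a j).
Hypothesis Hp : 1 < p.

Lemma fin_comb_cons j F x : fin_comb a (j :: F) x = seq_add (seq_scal (x j) (col a j)) (fin_comb a F x).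
Proof. apply functional_extensionality; intro i. reflexivity. Qed.

Lemma fin_comb_L F x : L (fin_comb a F x).
Proof. induction F. replace (fin_comb a nil x) with seq_zero. apply (L_zero L N HBFS). reflexivity.
 rewrite fin_comb_cons. apply (L_add L N HBFS); auto. apply (L_scal L N HBFS); auto. Qed.

Lemma Tm_L m z : L (Tm a m z). Proof. apply fin_comb_L. Qed.

Lemma N_fin_comb_le F x : N (fin_comb a F x) <= fin_sum F (fun j => Rabs (x j) * N (col a j)).
Proof. induction F. replace (fin_comb a nil x) with seq_zero by reflexivity. rewrite (N_zero L N HBFS). simpl; lra.
 rewrite fin_comb_cons. eapply Rle_trans. apply (N_tri L N HBFS); auto. apply (L_scal L N HBFS); auto. apply fin_comb_L.
 rewrite (N_scal L N HBFS); auto. unfold fin_sum; simpl. unfold fin_sum in IHF. lra. Qed.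

Lemma N_Tm_le m z : N (Tm a m z) <= psum (fun j => Rabs (z j) * N (col a j)) m.
Proof. unfold Tm. rewrite <- fin_sum_seq0. apply N_fin_comb_le. Qed.

Lemma N_Tm_sub m z w : N (Tm a m (fun j => z j - w j)) <= N (Tm a m z) + N (Tm a m w).
Proof. replace (Tm a m (fun j => z j - w j)) with (seq_add (Tm a m z) (seq_scal (-1) (Tm a m w))).
 apply (N_sub_tri L N HBFS); auto; apply Tm_L.
 rewrite <- Tm_scal, <- Tm_add. apply Tm_ext; intros; ring. Qed.

Definition Bd := exists C, 0 < C /\ forall m z, (forall j, 0 <= z j) -> N (Tm a m z) <= C * pnorm p m z.

Lemma lp_partial x m : in_lp p x -> psum (fun j => rp (Rabs (x j)) p) m <= Series (fun j => rp (Rabs (x j)) p).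
Proof. intros Hx. apply psum_le_Series; auto. intros; apply rp_nonneg. Qed.

Lemma pnorm_le_lp x z m : in_lp p x -> (forall j, 0 <= z j <= Rabs (x j)) -> pnorm p m z <= lp_norm p x.
Proof. intros Hx Hz. unfold pnorm, lp_norm. apply rp_mono. apply Rinv_0_lt_compat; lra.
 split. apply psum_nonneg; intros; apply rp_nonneg. eapply Rle_trans. 2: apply (lp_partial x m Hx).
 apply psum_le. intros; apply rp_mono; try lra; apply Hz. Qed.

End MAT.

Section MAT2.
Variables (L : seqR -> Prop) (N : seqR -> R) (a : nat -> nat -> R) (p : R).
Hypothesis HBFS : is_BFS L N.
Hypothesis HF : Fatou L N.
Hypothesis Hl1 : forall x, in_l1 x -> L x.
Hypothesis Hcol : forall j, L (col a j).
Hypothesis Hp : 1 < p.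

Lemma Tm_coord m z i : Rabs (Tm a m z i) <= N (Tm a m z) / N (ee i).
Proof. apply (coord_bound' L N HBFS Hl1). apply (Tm_L L N a HBFS Hcol). Qed.

Lemma Bd_a : Bd N a p -> exists K, forall x, in_lp p x ->
  (forall i, ex_series (fun j => Rabs (a i j * x j))) /\ L (Mapp a x) /\ N (Mapp a x) <= K * lp_norm p x.
Proof. intros [C [HC HB]]. exists (2 * C). intros x Hx.
 set (nx := lp_norm p x).
 assert (Hz : forall z m, (forall j, 0 <= z j <= Rabs (x j)) -> N (Tm a m z) <= C * nx).
 { intros z m Hzx. eapply Rle_trans. apply HB. intros; apply Hzx. apply Rmult_le_compat_l. lra.
   apply pnorm_le_lp; auto. }
 assert (Hrow : forall i, ex_series (fun j => Rabs (a i j * x j))).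
 { intros i. set (zp := fun j => if Rle_dec 0 (a i j) then Rabs (x j) else 0).
   set (zn := fun j => if Rle_dec 0 (a i j) then 0 else Rabs (x j)).
   apply ex_series_bounded with (2 * (C * nx / N (ee i))). intros; apply Rabs_pos.
   intros m. replace (psum (fun j => Rabs (a i j * x j)) m) with (Tm a m zp i - Tm a m zn i).
   - pose proof (Tm_coord m zp i). pose proof (Tm_coord m zn i). pose proof (Ne_pos L N HBFS Hl1 i).
     assert (N (Tm a m zp) / N (ee i) <= C * nx / N (ee i)).
     { apply Rmult_le_compat_r. left; apply Rinv_0_lt_compat; auto. apply Hz. intros j; unfold zp.
       destruct (Rle_dec 0 (a i j)); split; try apply Rabs_pos; lra. }
     assert (N (Tm a m zn) / N (ee i) <= C * nx / N (ee i)).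
     { apply Rmult_le_compat_r. left; apply Rinv_0_lt_compat; auto. apply Hz. intros j; unfold zn.
       destruct (Rle_dec 0 (a i j)); split; try apply Rabs_pos; lra. }
     apply Rabs_le_between in H. apply Rabs_le_between in H0. lra.
   - rewrite !Tm_apply. rewrite <- psum_minus. apply psum_ext. intros j _.
     unfold zp, zn. rewrite Rabs_mult. destruct (Rle_dec 0 (a i j)). rewrite (Rabs_right (a i j)) by lra. ring.
     rewrite (Rabs_left (a i j)) by lra. ring. }
 assert (Hxpm : forall m, N (Tm a m x) <= 2 * C * nx).
 { intros m. replace (Tm a m x) with (Tm a m (fun j => Rmax 0 (x j) - Rmax 0 (- x j))).
   eapply Rle_trans. apply (N_Tm_sub L N a HBFS Hcol). 
   assert (N (Tm a m (fun j => Rmax 0 (x j))) <= C * nx).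
   { apply Hz. intros j. split. apply Rmax_l. apply Rmax_lub. apply Rabs_pos. apply RRle_abs. }
   assert (N (Tm a m (fun j => Rmax 0 (- x j))) <= C * nx).
   { apply Hz. intros j. split. apply Rmax_l. apply Rmax_lub. apply Rabs_pos. rewrite <- Rabs_Ropp. apply RRle_abs. }
   lra. apply Tm_ext. intros j _. unfold Rmax. destruct (Rle_dec 0 (x j)), (Rle_dec 0 (- x j)); lra. }
 destruct (fatou_lsc L N HBFS HF (fun m => Tm a m x) (Mapp a x) (2 * C * nx)) as [HL HN].
 - intros; apply (Tm_L L N a HBFS Hcol).
 - intros i. unfold Mapp. assert (He : ex_series (fun j => a i j * x j)) by (apply ex_series_Rabs; auto).
   pose proof (Series_correct _ He) as Hs. apply is_series_psum in Hs.
   apply is_lim_seq_ext with (psum (fun j => a i j * x j)); auto. intros n. rewrite Tm_apply. apply psum_ext; intros; ring.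
 - auto.
 - split; auto.
Qed.

End MAT2.

Definition trunc (n : nat) (x : seqR) : seqR := fun j => if lt_dec j n then x j else 0.
Definition tailv (n : nat) (x : seqR) : seqR := fun j => if lt_dec j n then 0 else x j.

Lemma trunc_tail n x : seq_add (trunc n x) (tailv n x) = x.
Proof. apply functional_extensionality; intro j. unfold seq_add, trunc, tailv. destruct (lt_dec j n); ring. Qed.

Lemma trunc_l1 n x : in_l1 (trunc n x).
Proof. exists (psum (fun j => Rabs (trunc n x j)) n). apply series_fin. intros j Hj. unfold trunc.
 destruct (lt_dec j n). lia. apply Rabs_R0. Qed.

Lemma trunc_lp p n x : in_lp p (trunc n x).
Proof. exists (psum (fun j => rp (Rabs (trunc n x j)) p) n). apply series_fin. intros j Hj. unfold trunc.
 destruct (lt_dec j n). lia. rewrite Rabs_R0. apply rp_zero. Qed.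

Lemma lp_dom p x z : 0 < p -> in_lp p x -> (forall j, Rabs (z j) <= Rabs (x j)) -> in_lp p z.
Proof. intros Hp Hx H. apply (ex_series_le (V := R_CompleteNormedModule)) with (fun j => rp (Rabs (x j)) p); auto.
 intros n. change (Rabs (rp (Rabs (z n)) p) <= rp (Rabs (x n)) p). rewrite Rabs_right by (apply Rle_ge, rp_nonneg).
 apply rp_mono; auto. split; auto. apply Rabs_pos. Qed.

Lemma tail_lp p n x : 0 < p -> in_lp p x -> in_lp p (tailv n x).
Proof. intros Hp Hx. apply lp_dom with x; auto. intros j; unfold tailv. destruct (lt_dec j n).
 rewrite Rabs_R0; apply Rabs_pos. lra. Qed.

Lemma tail_small p x : 1 < p -> in_lp p x -> forall eps, 0 < eps -> exists n0, forall n, (n0 <= n)%nat -> lp_norm p (tailv n x) <= eps.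
Proof. intros Hp Hx eps He. set (f := fun j => rp (Rabs (x j)) p).
 pose proof (Series_correct _ Hx) as Hs. fold f in Hs. pose proof Hs as Hs'. apply is_series_psum in Hs'.
 apply is_lim_seq_spec in Hs'. assert (Hep : 0 < rp eps p) by (apply rp_pos_lt; auto).
 destruct (Hs' (mkposreal _ Hep)) as [n0 Hn0]. exists n0. intros n Hn. specialize (Hn0 n Hn). simpl in Hn0.
 assert (Ht : is_series (fun j => rp (Rabs (tailv n x j)) p) (Series f - psum f n)).
 { apply is_series_extR with (fun j => f j - trunc n f j).
   - intros j. unfold f, trunc, tailv. destruct (lt_dec j n). rewrite Rabs_R0, rp_zero. ring. ring.
   - apply (is_series_minus (V := R_NormedModule)). auto.
     replace (psum f n) with (psum (trunc n f) n). apply series_fin. intros j Hj; unfold trunc. destruct (lt_dec j n); auto; lia.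
     apply psum_ext. intros j Hj; unfold trunc. destruct (lt_dec j n); auto; lia. }
 unfold lp_norm. rewrite (is_series_unique _ _ Ht).
 assert (0 <= Series f - psum f n). { pose proof (psum_le_Series f n (fun j => rp_nonneg _ _) Hx). lra. }
 rewrite <- (rp_inv eps p) by lra. apply rp_mono. apply Rinv_0_lt_compat; lra.
 split; auto. apply Rabs_def2 in Hn0. lra. Qed.

Lemma lim_from_tail p x (u : nat -> R) l c : 1 < p -> in_lp p x -> 0 <= c ->
  (forall n, Rabs (u n - l) <= c * lp_norm p (tailv n x)) -> is_lim_seq u l.
Proof. intros Hp Hx Hc H. apply is_lim_seq_spec. intros eps.
 destruct (tail_small p x Hp Hx (eps / (2 * (c + 1)))) as [n0 Hn0].
 apply Rdiv_lt_0_compat. apply cond_pos. lra. exists n0. intros n Hn.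
 eapply Rle_lt_trans. apply H. specialize (Hn0 n Hn). pose proof (cond_pos eps).
 apply Rle_lt_trans with ((c + 1) * (eps / (2 * (c + 1)))).
 apply Rmult_le_compat; try lra. apply rp_nonneg. 
 replace ((c + 1) * (eps / (2 * (c + 1)))) with (eps / 2) by (field; lra). lra. Qed.

Lemma lp_norm_nonneg p x : 0 <= lp_norm p x.
Proof. apply rp_nonneg. Qed.

Section EASY.
Variables (L : seqR -> Prop) (N : seqR -> R) (a : nat -> nat -> R) (p : R).
Hypothesis HBFS : is_BFS L N.
Hypothesis HF : Fatou L N.
Hypothesis Hl1 : forall x, in_l1 x -> L x.
Hypothesis Hcol : forall j, L (col a j).
Hypothesis Hp : 1 < p.

Definition PA := (forall x, in_lp p x ->
       (forall i, ex_series (fun j => a i j * x j)) /\ L (Mapp a x)) /\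
    (exists K, forall x, in_lp p x -> N (Mapp a x) <= K * lp_norm p x).

Definition PB := exists T : seqR -> seqR,
      (forall x y, in_lp p x -> in_lp p y -> T (seq_add x y) = seq_add (T x) (T y)) /\
      (forall c x, in_lp p x -> T (seq_scal c x) = seq_scal c (T x)) /\
      (forall x, in_lp p x -> L (T x)) /\
      (exists K, forall x, in_lp p x -> N (T x) <= K * lp_norm p x) /\
      (forall x, in_l1 x -> T x = Mapp a x).

Lemma Mapp_add x y : (forall i, ex_series (fun j => a i j * x j)) -> (forall i, ex_series (fun j => a i j * y j)) ->
  Mapp a (seq_add x y) = seq_add (Mapp a x) (Mapp a y).
Proof. intros Hx Hy. apply functional_extensionality; intro i. unfold Mapp, seq_add.
 rewrite <- Series_plus; auto. apply Series_ext; intros; ring. Qed.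

Lemma a_b : PA -> PB.
Proof. intros [H1 [K HK]]. exists (Mapp a). split; [|split; [|split; [|split]]].
 - intros x y Hx Hy. apply Mapp_add; apply H1; auto.
 - intros c x Hx. apply functional_extensionality; intro i. unfold Mapp, seq_scal.
   rewrite <- Series_scal_l. apply Series_ext; intros; ring.
 - intros; apply H1; auto.
 - exists K; auto.
 - auto.
Qed.

Lemma b_a : PB -> PA.
Proof. intros [T [Hadd [Hsc [HL [[K HK] Hl]]]]].
 assert (HK' : forall x, in_lp p x -> N (T x) <= Rmax K 0 * lp_norm p x).
 { intros. eapply Rle_trans. apply HK; auto. apply Rmult_le_compat_r. apply lp_norm_nonneg. apply Rmax_l. }
 assert (HM : forall x, in_lp p x -> (forall i, ex_series (fun j => a i j * x j)) /\ Mapp a x = T x).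
 { intros x Hx.
   assert (Hs : forall i, is_series (fun j => a i j * x j) (T x i)).
   { intros i. apply is_series_psum. 
     apply (lim_from_tail p x _ _ (Rmax K 0 / N (ee i))); auto.
     apply Rdiv_le_0_compat. apply Rmax_r. apply (Ne_pos L N HBFS Hl1).
     intros n. 
     assert (E : T x = seq_add (T (trunc n x)) (T (tailv n x))).
     { rewrite <- Hadd. rewrite trunc_tail; auto. apply trunc_lp. apply tail_lp; auto; lra. }
     assert (E2 : T (trunc n x) = Tm a n x).
     { rewrite Hl by apply trunc_l1. rewrite (Mapp_fin a n). apply Tm_ext. intros j Hj; unfold trunc.
       destruct (lt_dec j n); auto; lia. intros j Hj; unfold trunc. destruct (lt_dec j n); auto; lia. }
     rewrite E, E2. unfold seq_add. rewrite Tm_apply.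
     replace (psum (fun j => a i j * x j) n - (psum (fun j => x j * a i j) n + T (tailv n x) i))
       with (- T (tailv n x) i).
     2:{ rewrite (psum_ext (fun j => a i j * x j) (fun j => x j * a i j)). ring. intros; ring. }
     rewrite Rabs_Ropp. assert (Htl : in_lp p (tailv n x)) by (apply tail_lp; auto; lra).
     eapply Rle_trans. apply (coord_bound' L N HBFS Hl1). apply HL; auto.
     unfold Rdiv. rewrite Rmult_assoc, (Rmult_comm (/ _)), <- Rmult_assoc.
     apply Rmult_le_compat_r. left; apply Rinv_0_lt_compat, (Ne_pos L N HBFS Hl1). auto. }
   split. intros i; exists (T x i); auto.
   apply functional_extensionality; intro i. unfold Mapp. apply is_series_unique; auto. }
 split.
 - intros x Hx. destruct (HM x Hx) as [H1 H2]. split; auto. rewrite H2; auto.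
 - exists (Rmax K 0). intros x Hx. destruct (HM x Hx) as [H1 H2]. rewrite H2; auto.
Qed.

Lemma phi_zero phi : in_dual L N phi -> phi seq_zero = 0.
Proof. intros [_ [Hs _]]. replace seq_zero with (seq_scal 0 seq_zero). rewrite Hs. ring. apply (L_zero L N HBFS).
 apply functional_extensionality; intro; unfold seq_scal, seq_zero; ring. Qed.

Lemma phi_fin_comb phi F x : in_dual L N phi -> phi (fin_comb a F x) = fin_sum F (fun j => x j * phi (col a j)).
Proof. intros Hphi. induction F. apply phi_zero; auto.
 rewrite fin_comb_cons. destruct Hphi as [Ha [Hs _]]. rewrite Ha. rewrite Hs; auto. rewrite IHF. reflexivity.
 apply (L_scal L N HBFS); auto. apply (fin_comb_L L N a HBFS Hcol). Qed.

Lemma phi_Tm phi m x : in_dual L N phi -> phi (Tm a m x) = psum (fun j => x j * phi (col a j)) m.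
Proof. intros. unfold Tm. rewrite phi_fin_comb; auto. apply fin_sum_seq0. Qed.

Lemma key_series phi x : PA -> in_dual L N phi -> in_lp p x ->
  is_series (fun j => x j * phi (col a j)) (phi (Mapp a x)).
Proof. intros [H1 [K HK]] Hphi Hx. pose proof Hphi as [Ha [Hs [K' HK']]].
 apply is_series_psum. apply (lim_from_tail p x _ _ (Rmax K' 0 * Rmax K 0)); auto.
 apply Rmult_le_pos; apply Rmax_r.
 intros n. assert (Htl : in_lp p (tailv n x)) by (apply tail_lp; auto; lra).
 assert (E : Mapp a x = seq_add (Tm a n x) (Mapp a (tailv n x))).
 { rewrite <- (trunc_tail n x) at 1. rewrite Mapp_add. f_equal. rewrite (Mapp_fin a n).
   apply Tm_ext. intros j Hj; unfold trunc. destruct (lt_dec j n); auto; lia.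
   intros j Hj; unfold trunc. destruct (lt_dec j n); auto; lia.
   apply H1, trunc_lp. apply H1; auto. }
 rewrite E, Ha. rewrite phi_Tm; auto. 
 replace (psum (fun j => x j * phi (col a j)) n - (psum (fun j => x j * phi (col a j)) n + phi (Mapp a (tailv n x))))
  with (- phi (Mapp a (tailv n x))) by ring. rewrite Rabs_Ropp.
 assert (HLt : L (Mapp a (tailv n x))) by (apply H1; auto).
 eapply Rle_trans. apply HK'; auto. 
 apply Rle_trans with (Rmax K' 0 * N (Mapp a (tailv n x))).
 apply Rmult_le_compat_r. apply (N_nonneg L N HBFS); auto. apply Rmax_l.
 rewrite Rmult_assoc. apply Rmult_le_compat_l. apply Rmax_r.
 eapply Rle_trans. apply HK; auto. apply Rmult_le_compat_r. apply lp_norm_nonneg. apply Rmax_l.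
 all: try apply (Tm_L L N a HBFS Hcol). all: apply H1; auto. Qed.

End EASY.

Lemma l1_lp p x : 1 < p -> in_l1 x -> in_lp p x.
Proof. intros Hp Hx. set (M := Series (fun j => Rabs (x j))).
 assert (HM : forall j, Rabs (x j) <= M).
 { intros j. eapply Rle_trans. 2: apply (psum_le_Series _ (S j)); auto. simpl.
   pose proof (psum_nonneg (fun j => Rabs (x j)) j (fun k => Rabs_pos _)). lra. intros; apply Rabs_pos. }
 clearbody M. apply ex_series_leR with (fun j => (1 + rp M p) * Rabs (x j)). 2: apply ex_series_scalR; auto.
 intros j. split. apply rp_nonneg. pose proof (rp_nonneg M p). pose proof (Rabs_pos (x j)).
 destruct (Rle_dec (Rabs (x j)) 1).
 - pose proof (rp_le_self (Rabs (x j)) p). assert (rp (Rabs (x j)) p <= Rabs (x j)) by (apply H1; [lra | split; lra]).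
   assert (0 <= rp M p * Rabs (x j)) by (apply Rmult_le_pos; auto). rewrite Rmult_plus_distr_r, Rmult_1_l. lra.
 - apply Rnot_le_lt in n. assert (rp (Rabs (x j)) p <= rp M p) by (apply rp_mono; [lra | split; [lra | apply HM]]).
   assert (rp M p * 1 <= rp M p * Rabs (x j)) by (apply Rmult_le_compat_l; lra). rewrite Rmult_plus_distr_r, Rmult_1_l. lra. Qed.

Lemma list_bound (F : list nat) : exists m, forall j, In j F -> (j < m)%nat.
Proof. induction F. exists O. intros j []. destruct IHF as [m Hm]. exists (S (max a m)).
 intros j [<-|Hj]. lia. specialize (Hm j Hj). lia. Qed.

Lemma psum_delta j0 c m : (j0 < m)%nat -> psum (fun j => if Nat.eq_dec j j0 then c else 0) m = c.
Proof. intros H. induction H; simpl.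
 - rewrite psum_zero. destruct (Nat.eq_dec j0 j0); [ring|congruence]. intros j Hj. destruct (Nat.eq_dec j j0); auto; lia.
 - rewrite IHle. destruct (Nat.eq_dec m j0). lia. ring. Qed.

Lemma fin_sum_NoDup F f m : NoDup F -> (forall j, In j F -> (j < m)%nat) ->
  fin_sum F f = psum (fun j => if in_dec Nat.eq_dec j F then f j else 0) m.
Proof. induction F as [|j0 F IH]; intros HD Hm.
 - simpl. rewrite psum_zero; auto.
 - inversion HD; subst. change (fin_sum (j0::F) f) with (f j0 + fin_sum F f). rewrite IH; auto.
   rewrite <- (psum_delta j0 (f j0) m) at 1 by (apply Hm; left; auto). rewrite <- psum_plus. apply psum_ext.
   intros j _. destruct (Nat.eq_dec j j0), (in_dec Nat.eq_dec j (j0 :: F)), (in_dec Nat.eq_dec j F).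
   all: try (subst; ring); try (exfalso; subst; simpl in *; intuition; fail).
   intros; apply Hm; right; auto. Qed.

Section EASY2.
Variables (L : seqR -> Prop) (N : seqR -> R) (a : nat -> nat -> R) (p : R).
Hypothesis HBFS : is_BFS L N.
Hypothesis HF : Fatou L N.
Hypothesis Hl1 : forall x, in_l1 x -> L x.
Hypothesis Hcol : forall j, L (col a j).
Hypothesis Hp : 1 < p.

Definition PC := forall x, in_lp p x -> in_l1m L N a x.
Definition PD := forall x, in_l1 x -> in_lrm L N a (/ p) x /\ in_l1m L N a x.
Definition PE := exists C, 0 < C /\
      forall (F : list nat) (x : seqR), NoDup F -> (forall j, In j F -> 0 <= x j) ->
        N (fin_comb a F x) <= C * rp (fin_sum F (fun j => rp (x j) p)) (/ p).
Definition Hh := forall x, (forall j, 0 <= x j) -> in_lp p x ->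
  (forall i, ex_series (fun j => Rabs (a i j) * x j)) /\ L (Mapp a x).

Lemma a_c : PA L N a p -> PC.
Proof. intros HA x Hx. pose proof HA as [H1 _]. split.
 - intros phi Hphi. set (z := fun j => if Rle_dec 0 (phi (col a j)) then Rabs (x j) else - Rabs (x j)).
   assert (Hz : in_lp p z). { apply lp_dom with x; auto. lra. intros j; unfold z.
     destruct (Rle_dec 0 (phi (col a j))). rewrite Rabs_Rabsolu; lra. rewrite Rabs_Ropp, Rabs_Rabsolu; lra. }
   pose proof (key_series L N a p HBFS Hcol Hp phi z HA Hphi Hz) as Hs.
   apply ex_series_extR with (fun j => z j * phi (col a j)). 2: eexists; eauto.
   intros j; unfold z. destruct (Rle_dec 0 (phi (col a j))). rewrite (Rabs_right (phi _)) by lra. ring.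
   rewrite (Rabs_left (phi _)) by lra. ring.
 - intros A. set (z := fun j => if A j then x j else 0).
   assert (Hz : in_lp p z). { apply lp_dom with x; auto. lra. intros j; unfold z.
     destruct (A j). lra. rewrite Rabs_R0; apply Rabs_pos. }
   exists (Mapp a z). split. apply H1; auto. intros phi Hphi. unfold int_scalar. symmetry.
   apply is_series_unique. apply is_series_extR with (fun j => z j * phi (col a j)).
   intros j; unfold z. destruct (A j); ring. apply (key_series L N a p HBFS Hcol Hp); auto. Qed.

Lemma coord_dual i : in_dual L N (fun y => y i).
Proof. split; [|split]. intros; reflexivity. intros; reflexivity.
 exists (/ N (ee i)). intros y Hy. rewrite Rmult_comm. apply (coord_bound' L N HBFS Hl1); auto. Qed.

Lemma l1m_H x : in_l1m L N a x -> (forall i, ex_series (fun j => Rabs (x j) * Rabs (a i j))) /\ L (Mapp a x).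
Proof. intros [H1 H2]. split. intros i. apply (H1 _ (coord_dual i)).
 destruct (H2 (fun _ => true)) as [v [Hv Hphi]].
 replace (Mapp a x) with v; auto. apply functional_extensionality; intro i.
 rewrite (Hphi _ (coord_dual i)). unfold int_scalar, Mapp. apply Series_ext. intros j. unfold col. ring. Qed.

Lemma l1m_Hn x : (forall j, 0 <= x j) -> in_l1m L N a x ->
  (forall i, ex_series (fun j => Rabs (a i j) * x j)) /\ L (Mapp a x).
Proof. intros Hx0 Hl. destruct (l1m_H x Hl) as [H1 H2]. split; auto.
 intros i. apply ex_series_extR with (fun j => Rabs (x j) * Rabs (a i j)); auto.
 intros j. rewrite Rabs_right by (apply Rle_ge; auto). ring. Qed.

Lemma c_H : PC -> Hh.
Proof. intros HC x Hx0 Hx. apply l1m_Hn; auto. Qed.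

Lemma d_H : PD -> Hh.
Proof. intros HD x Hx0 Hx. set (y := fun j => rp (x j) p).
 assert (Hy : in_l1 y). { unfold in_l1. apply ex_series_extR with (fun j => rp (Rabs (x j)) p); auto.
   intros j; unfold y. rewrite (Rabs_right (rp _ _)) by (apply Rle_ge, rp_nonneg). rewrite Rabs_right by (apply Rle_ge; auto). auto. }
 destruct (HD y Hy) as [Hr _]. unfold in_lrm in Hr.
 replace (fun j => rp (Rabs (y j)) (/ p)) with x in Hr. apply l1m_Hn; auto.
 apply functional_extensionality; intro j. unfold y. rewrite Rabs_right by (apply Rle_ge, rp_nonneg).
 rewrite rp_inv; auto; lra. Qed.

Lemma a_d : PA L N a p -> PD.
Proof. intros HA x Hx. split.
 - unfold in_lrm. apply a_c; auto. unfold in_lp. apply ex_series_extR with (fun j => Rabs (x j)); auto.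
   intros j. rewrite (Rabs_right (rp _ _)) by (apply Rle_ge, rp_nonneg). rewrite rp_inv'; auto. lra. apply Rabs_pos.
 - apply a_c; auto. apply l1_lp; auto.
Qed.

Lemma a_e : PA L N a p -> PE.
Proof. intros [H1 [K HK]]. exists (Rmax K 1). split. apply Rlt_le_trans with 1. lra. apply Rmax_r.
 intros F x HD Hx0. destruct (list_bound F) as [m Hm].
 set (z := fun j => if in_dec Nat.eq_dec j F then x j else 0).
 assert (Hz0 : forall j, 0 <= z j). { intros j; unfold z. destruct (in_dec Nat.eq_dec j F); auto; lra. }
 assert (Hzm : forall j, (m <= j)%nat -> z j = 0).
 { intros j Hj; unfold z. destruct (in_dec Nat.eq_dec j F); auto. specialize (Hm j i). lia. }
 assert (E1 : fin_comb a F x = Tm a m z).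
 { apply functional_extensionality; intro i. rewrite Tm_apply.
   change (fin_sum F (fun j => x j * a i j) = psum (fun j => z j * a i j) m). rewrite (fin_sum_NoDup F _ m); auto.
   apply psum_ext. intros j _. unfold z. destruct (in_dec Nat.eq_dec j F); ring. }
 assert (E2 : fin_sum F (fun j => rp (x j) p) = psum (fun j => rp (z j) p) m).
 { rewrite (fin_sum_NoDup F _ m); auto. apply psum_ext. intros j _. unfold z. destruct (in_dec Nat.eq_dec j F); auto.
   rewrite rp_zero; auto. }
 assert (Hzl : in_lp p z). { exists (psum (fun j => rp (Rabs (z j)) p) m). apply series_fin. intros j Hj.
   rewrite Hzm, Rabs_R0, rp_zero; auto. }
 rewrite E1, E2. rewrite <- (Mapp_fin a m z Hzm). eapply Rle_trans. apply HK; auto.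
 assert (E3 : lp_norm p z = rp (psum (fun j => rp (z j) p) m) (/ p)).
 { unfold lp_norm. f_equal. rewrite (Series_fin _ m). apply psum_ext. intros j _. rewrite Rabs_right; auto. apply Rle_ge; auto.
   intros j Hj. rewrite Hzm, Rabs_R0, rp_zero; auto. }
 rewrite E3. apply Rmult_le_compat_r. apply rp_nonneg. apply Rmax_l. Qed.

Lemma e_Bd : PE -> Bd N a p.
Proof. intros [C [HC H]]. exists C. split; auto. intros m z Hz. unfold Tm, pnorm.
 rewrite <- fin_sum_seq0. apply H. apply seq_NoDup. intros; auto. Qed.

End EASY2.

Lemma rp_Rinv s r : 0 < s -> rp (/ s) r = / rp s r.
Proof. intros Hs. rewrite !rp_pos; auto. unfold Rpower. rewrite ln_Rinv; auto.
 rewrite <- exp_Ropp. f_equal; ring. apply Rinv_0_lt_compat; auto. Qed.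

Lemma rp_div z s r : 0 <= z -> 0 < s -> rp (z / s) r = rp z r / rp s r.
Proof. intros. unfold Rdiv. rewrite rp_mul; auto. rewrite rp_Rinv; auto. left; apply Rinv_0_lt_compat; auto. Qed.

Lemma psum_le_supp g m M : (forall j, 0 <= g j) -> (forall j, (m <= j)%nat -> g j = 0) -> psum g M <= psum g m.
Proof. intros H0 Hs. destruct (le_lt_dec M m). apply psum_mono; auto.
 rewrite (psum_tail g m M); auto; try lra; lia. Qed.

Lemma psum_ind_le n c m : 0 <= c -> psum (fun j => if lt_dec j n then c else 0) m <= INR n * c.
Proof. intros Hc. assert (Hn : psum (fun j => if lt_dec j n then c else 0) n = INR n * c).
 { clear m. assert (forall k, (k <= n)%nat -> psum (fun j => if lt_dec j n then c else 0) k = INR k * c).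
   { induction k; intros Hk. simpl; ring. rewrite psum_S, IHk by lia. destruct (lt_dec k n). rewrite S_INR; ring. lia. }
   apply H; lia. }
 eapply Rle_trans. apply psum_le_supp with (m := n). intros j; destruct (lt_dec j n); lra.
 intros j Hj; destruct (lt_dec j n); auto; lia. rewrite Hn; lra. Qed.

Lemma pnorm_zero p m z : 0 < p -> (forall j, 0 <= z j) -> pnorm p m z = 0 -> forall j, (j < m)%nat -> z j = 0.
Proof. intros Hp Hz H j Hj. assert (0 <= z j <= 0). split; auto. rewrite <- H. apply coord_le_pnorm; auto. lra. Qed.

Section BLOCK.
Variable p : R.
Hypothesis Hp : 1 < p.
Variable Phi : nat -> seqR -> R.
Hypothesis Hloc : forall m z w, (forall j, (j < m)%nat -> z j = w j) -> Phi m z = Phi m w.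
Hypothesis Hhom : forall m z s, 0 < s -> Phi m (fun j => z j / s) = Phi m z / s.
Hypothesis Hsplit : forall m n z, Phi m z <= Phi m (trunc n z) + Phi m (tailv n z).
Hypothesis Hhead : forall n, exists H, forall m z, (forall j, 0 <= z j) -> Phi m (trunc n z) <= H * pnorm p m z.
Hypothesis Hzero : forall m z, (forall j, (j < m)%nat -> z j = 0) -> Phi m z <= 0.
Hypothesis Hunb : forall C, 0 < C -> exists m z, (forall j, 0 <= z j) /\ C * pnorm p m z < Phi m z.

Lemma block_lemma n R : exists m w, (n < m)%nat /\ (forall j, 0 <= w j) /\
  (forall j, (j < n \/ m <= j)%nat -> w j = 0) /\ (forall M, psum (fun j => rp (w j) p) M <= 1) /\ R < Phi m w.
Proof. destruct (Hhead n) as [H HH]. set (C := Rmax H 0 + Rmax R 0 + 1).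
 assert (HC : 0 < C) by (unfold C; pose proof (Rmax_r H 0); pose proof (Rmax_r R 0); lra).
 destruct (Hunb C HC) as [m [z [Hz0 Hz]]]. set (s := pnorm p m z).
 assert (Hs0 : 0 <= s) by apply pnorm_nonneg.
 assert (Hs : 0 < s). { destruct Hs0; auto. exfalso. pose proof (Hzero m z (pnorm_zero p m z ltac:(lra) Hz0 (eq_sym H0))).
   fold s in Hz. rewrite <- H0 in Hz. lra. }
 assert (Htl : (C - H) * s < Phi m (tailv n z)).
 { pose proof (Hsplit m n z). pose proof (HH m z Hz0). fold s in H1, Hz. 
   assert (H * s <= Rmax H 0 * s) by (apply Rmult_le_compat_r; auto; apply Rmax_l). nra. }
 assert (HCH : Rmax R 0 + 1 <= C - H) by (unfold C; pose proof (Rmax_l H 0); lra).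
 assert (Hmn : (n < m)%nat).
 { destruct (le_lt_dec m n); auto. exfalso. assert (Phi m (tailv n z) <= 0).
   apply Hzero. intros j Hj; unfold tailv. destruct (lt_dec j n); auto; lia.
   pose proof (Rmax_r R 0). assert (0 < (C - H) * s) by (apply Rmult_lt_0_compat; lra). lra. }
 set (w := fun j => if lt_dec j m then tailv n z j / s else 0).
 exists m, w. split; [auto|split;[|split;[|split]]].
 - intros j; unfold w, tailv. destruct (lt_dec j m), (lt_dec j n); try lra. apply Rdiv_le_0_compat; auto.
 - intros j Hj; unfold w, tailv. destruct (lt_dec j m), (lt_dec j n); try lia; auto. unfold Rdiv; ring.
 - intros M. eapply Rle_trans. apply psum_le_supp with (m := m). intros; apply rp_nonneg.
   intros j Hj. unfold w. destruct (lt_dec j m). lia. apply rp_zero.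
   assert (Hrs : rp s p = psum (fun j => rp (z j) p) m).
   { unfold s, pnorm. apply rp_inv'. lra. apply psum_nonneg; intros; apply rp_nonneg. }
   assert (0 < rp s p) by (apply rp_pos_lt; auto).
   apply Rle_trans with (psum (fun j => rp (z j) p / rp s p) m).
   + apply psum_le. intros j Hj. unfold w. destruct (lt_dec j m); [|lia]. unfold tailv. destruct (lt_dec j n).
     unfold Rdiv at 1. rewrite Rmult_0_l, rp_zero. apply Rdiv_le_0_compat; auto. apply rp_nonneg.
     rewrite rp_div; auto. lra.
   + unfold Rdiv. rewrite (psum_ext _ (fun j => / rp s p * rp (z j) p)) by (intros; ring). rewrite psum_scal.
     rewrite <- Hrs. rewrite Rinv_l; lra.
 - rewrite (Hloc m w (fun j => tailv n z j / s)). rewrite Hhom; auto.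
   apply Rmult_lt_reg_r with s; auto. unfold Rdiv. rewrite Rmult_assoc, Rinv_l, Rmult_1_r by lra.
   pose proof (Rmax_l R 0). nra.
   intros j Hj. unfold w. destruct (lt_dec j m); auto; lia. Qed.
End BLOCK.

Record st := mkst { sk : nat; sn : nat; sX : seqR; sr : nat }.

Definition blockok (p : R) (k n : nat) (c : R) (m : nat) (w : seqR) : Prop :=
  0 < c /\ c <= (/ 2) ^ k /\ (n < m)%nat /\ (forall j, 0 <= w j) /\
  (forall j, (j < n \/ m <= j)%nat -> w j = 0) /\ (forall M, psum (fun j => rp (w j) p) M <= 1).

Lemma st_eta s k : sk s = k -> s = mkst k (sn s) (sX s) (sr s).
Proof. destruct s; simpl; intros; subst; reflexivity. Qed.

Lemma hump_build (p : R) (Q : st -> R -> nat -> seqR -> nat -> Prop) (r0 : nat) :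
  (forall s, exists c m w r', blockok p (sk s) (sn s) c m w /\ (sr s <= r')%nat /\ Q s c m w r') ->
  exists (cc : nat -> R) (nn rr : nat -> nat) (XX ww : nat -> seqR),
    nn 0%nat = 0%nat /\ XX 0%nat = seq_zero /\
    forall k, blockok p k (nn k) (cc k) (nn (S k)) (ww k) /\ (rr k <= rr (S k))%nat /\
      XX (S k) = (fun j => XX k j + cc k * ww k j) /\
      Q (mkst k (nn k) (XX k) (rr k)) (cc k) (nn (S k)) (ww k) (rr (S k)).
Proof. intros Hstep.
 assert (Hg : forall s, {t : R * nat * seqR * nat | let '(c, m, w, r') := t in
     blockok p (sk s) (sn s) c m w /\ (sr s <= r')%nat /\ Q s c m w r'}).
 { intros s. apply constructive_indefinite_description. destruct (Hstep s) as [c [m [w [r' H]]]].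
   exists (c, m, w, r'). exact H. }
 set (next := fun s => let '(c, m, w, r') := proj1_sig (Hg s) in mkst (S (sk s)) m (fun j => sX s j + c * w j) r').
 set (S0 := mkst 0 0 seq_zero r0).
 set (sq := fun k => Nat.iter k next S0).
 set (dat := fun k => proj1_sig (Hg (sq k))).
 exists (fun k => let '(c, _, _, _) := dat k in c).
 exists (fun k => sn (sq k)). exists (fun k => sr (sq k)). exists (fun k => sX (sq k)).
 exists (fun k => let '(_, _, w, _) := dat k in w).
 assert (Hsk : forall k, sk (sq k) = k).
 { induction k. reflexivity. change (sq (S k)) with (next (sq k)). unfold next.
   destruct (proj1_sig (Hg (sq k))) as [[[c m] w] r']. simpl. auto. }
 split. reflexivity. split. reflexivity. intros k.
 assert (Hd := proj2_sig (Hg (sq k))). fold (dat k) in Hd.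
 assert (Hn : sq (S k) = next (sq k)) by reflexivity.
 unfold next in Hn. fold (dat k) in Hn.
 destruct (dat k) as [[[c m] w] r'] eqn:Edat. destruct Hd as [Hb [Hr HQ]].
 rewrite Hn. simpl. rewrite Hsk in Hb. split; auto. split; auto. split; auto.
 rewrite <- (st_eta (sq k) k (Hsk k)). auto. Qed.

Section HUMP.
Variable p : R.
Hypothesis Hp : 1 < p.
Variables (cc : nat -> R) (nn : nat -> nat) (XX ww : nat -> seqR).
Hypothesis Hn0 : nn 0%nat = 0%nat.
Hypothesis HX0 : XX 0%nat = seq_zero.
Hypothesis Hblk : forall k, blockok p k (nn k) (cc k) (nn (S k)) (ww k).
Hypothesis HXS : forall k, XX (S k) = (fun j => XX k j + cc k * ww k j).

Lemma nn_lt k : (nn k < nn (S k))%nat. Proof. apply Hblk. Qed.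
Lemma cc_pos k : 0 < cc k. Proof. apply Hblk. Qed.
Lemma cc_le k : cc k <= (/ 2) ^ k. Proof. apply Hblk. Qed.
Lemma ww_nonneg k j : 0 <= ww k j. Proof. apply Hblk. Qed.
Lemma ww_supp k j : (j < nn k \/ nn (S k) <= j)%nat -> ww k j = 0. Proof. apply Hblk. Qed.
Lemma ww_norm k M : psum (fun j => rp (ww k j) p) M <= 1. Proof. apply Hblk. Qed.

Lemma nn_ge k : (k <= nn k)%nat.
Proof. induction k. lia. pose proof (nn_lt k). lia. Qed.

Lemma nn_mono k l : (k <= l)%nat -> (nn k <= nn l)%nat.
Proof. intros H. induction H. lia. pose proof (nn_lt m). lia. Qed.

Lemma XX_nonneg k j : 0 <= XX k j.
Proof. induction k. rewrite HX0. unfold seq_zero; lra. rewrite HXS.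
 pose proof (cc_pos k). pose proof (ww_nonneg k j). nra. Qed.

Lemma XX_supp k j : (nn k <= j)%nat -> XX k j = 0.
Proof. induction k; intros H. rewrite HX0; reflexivity. rewrite HXS.
 pose proof (nn_lt k). rewrite IHk by lia. rewrite ww_supp by lia. ring. Qed.

Lemma XX_stable k l j : (j < nn k)%nat -> (k <= l)%nat -> XX l j = XX k j.
Proof. intros Hj H. induction H. auto. rewrite HXS. rewrite IHle. rewrite ww_supp. ring.
 left. pose proof (nn_mono k m H). lia. Qed.

Lemma XX_mono k l j : (k <= l)%nat -> XX k j <= XX l j.
Proof. intros H. induction H. lra. rewrite HXS. pose proof (cc_pos m). pose proof (ww_nonneg m j). nra. Qed.

Definition xh : seqR := fun j => XX (S j) j.

Lemma xh_eq K j : (j < nn K)%nat -> xh j = XX K j.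
Proof. intros Hj. unfold xh. pose proof (nn_ge (S j)). destruct (le_lt_dec K (S j)).
 apply XX_stable; auto. symmetry. apply XX_stable; lia. Qed.

Lemma xh_nonneg j : 0 <= xh j. Proof. apply XX_nonneg. Qed.

Lemma xh_ge k j : XX k j <= xh j.
Proof. destruct (le_lt_dec k (S j)). unfold xh; apply XX_mono; auto.
 rewrite (xh_eq k j). lra. pose proof (nn_ge k). lia. Qed.

Lemma xh_ge_block k j : cc k * ww k j <= xh j.
Proof. eapply Rle_trans. 2: apply (xh_ge (S k)). rewrite HXS. pose proof (XX_nonneg k j). lra. Qed.

Lemma geom_psum K : psum (fun k => (/ 2) ^ k) K = 2 - 2 * (/ 2) ^ K.
Proof. induction K. simpl; ring. rewrite psum_S, IHK. simpl. field. Qed.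

Lemma XX_norm K M : psum (fun j => rp (XX K j) p) M <= psum (fun k => (/ 2) ^ k) K.
Proof. induction K.
 - rewrite HX0. unfold seq_zero. rewrite psum_zero. simpl; lra. intros; apply rp_zero.
 - rewrite psum_S. 
   assert (E : forall j, rp (XX (S K) j) p = rp (XX K j) p + rp (cc K) p * rp (ww K j) p).
   { intros j. rewrite HXS. destruct (le_lt_dec (nn K) j).
     - rewrite XX_supp by auto. rewrite rp_zero, Rplus_0_l, Rplus_0_l. apply rp_mul. left; apply cc_pos. apply ww_nonneg.
     - rewrite (ww_supp K j) by lia. rewrite Rmult_0_r, Rplus_0_r, rp_zero. ring. }
   rewrite (psum_ext _ _ M (fun j _ => E j)). rewrite psum_plus, psum_scal.
   pose proof (ww_norm K M). pose proof (rp_nonneg (cc K) p).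
   assert (rp (cc K) p <= (/ 2) ^ K).
   { eapply Rle_trans. apply rp_le_self. lra. split. left; apply cc_pos.
     eapply Rle_trans. apply cc_le. apply pow_le_1 || idtac. 
     pose proof (pow_le (/2) K). rewrite <- (pow1 K). apply pow_incr. lra. apply cc_le. }
   assert (rp (cc K) p * psum (fun j => rp (ww K j) p) M <= rp (cc K) p * 1) by (apply Rmult_le_compat_l; auto).
   lra. Qed.

Lemma xh_lp : in_lp p xh.
Proof. apply ex_series_bounded with 2. intros; apply rp_nonneg. intros M.
 rewrite (psum_ext _ (fun j => rp (XX M j) p)). eapply Rle_trans. apply XX_norm. rewrite geom_psum.
 pose proof (pow_le (/2) M). lra.
 intros j Hj. rewrite Rabs_right by (apply Rle_ge, xh_nonneg). rewrite (xh_eq M); auto. pose proof (nn_ge M). lia. Qed.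

Lemma tail_bound (g : nat -> R) D t k : (forall j, 0 <= g j) -> 0 <= D -> 0 <= t ->
  (forall l M, psum (fun j => g j * ww l j) M <= D) ->
  (forall l, (k < l)%nat -> cc l <= t * (/ 2) ^ l) ->
  forall M, psum (fun j => g j * (xh j - XX (S k) j)) M <= D * t * (/ 2) ^ k.
Proof. intros Hg HD Ht Hw Hc M.
 assert (Hd : forall d, psum (fun j => g j * (XX (S k + d) j - XX (S k) j)) M <= D * t * ((/ 2) ^ k - (/ 2) ^ (k + d))).
 { induction d.
   - rewrite Nat.add_0_r. rewrite psum_zero. rewrite Nat.add_0_r. lra. intros; ring.
   - replace (S k + S d)%nat with (S (S k + d)) by lia. rewrite HXS.
     rewrite (psum_ext _ (fun j => g j * (XX (S k + d) j - XX (S k) j) + cc (S k + d)%nat * (g j * ww (S k + d)%nat j)))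
       by (intros; ring).
     rewrite psum_plus, psum_scal. pose proof (Hw (S k + d)%nat M). pose proof (Hc (S k + d)%nat ltac:(lia)).
     pose proof (cc_pos (S k + d)). 
     assert (cc (S k + d)%nat * psum (fun j => g j * ww (S k + d)%nat j) M <= t * (/ 2) ^ (S k + d) * D).
     { apply Rmult_le_compat; auto. left; auto. apply psum_nonneg. intros; apply Rmult_le_pos; auto; apply ww_nonneg. }
     replace (k + S d)%nat with (S (k + d)) by lia. replace (S k + d)%nat with (S (k + d)) in H2 by lia.
     simpl in *. lra. }
 rewrite (psum_ext _ (fun j => g j * (XX (S k + M) j - XX (S k) j))).
 eapply Rle_trans. apply Hd. pose proof (pow_le (/2) (k + M)). 
 assert (0 <= D * t) by (apply Rmult_le_pos; auto). nra.
 intros j Hj. rewrite (xh_eq (S k + M)); auto. pose proof (nn_ge (S k + M)). lia. Qed.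

End HUMP.

Section HARD.
Variables (L : seqR -> Prop) (N : seqR -> R) (a : nat -> nat -> R) (p : R).
Hypothesis HBFS : is_BFS L N.
Hypothesis HF : Fatou L N.
Hypothesis Hl1 : forall x, in_l1 x -> L x.
Hypothesis Hcol : forall j, L (col a j).
Hypothesis Hp : 1 < p.
Hypothesis HH : Hh L a p.

Lemma trunc_tail_pt n z j : z j = trunc n z j + tailv n z j.
Proof. unfold trunc, tailv. destruct (lt_dec j n); ring. Qed.

Lemma trunc_le_pnorm n m z j : (forall k, 0 <= z k) -> (j < m)%nat -> Rabs (trunc n z j) <= (if lt_dec j n then pnorm p m z else 0).
Proof. intros Hz Hj. unfold trunc. destruct (lt_dec j n). rewrite Rabs_right by (apply Rle_ge; auto).
 apply coord_le_pnorm; auto; lra. rewrite Rabs_R0; lra. Qed.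

Lemma row_bound i : exists D, 0 <= D /\ forall w M, (forall j, 0 <= w j) ->
  psum (fun j => Rabs (a i j) * w j) M <= D * pnorm p M w.
Proof. apply NNPP; intro Hneg.
 set (Phi := fun m z => psum (fun j => Rabs (a i j) * z j) m).
 assert (Hblk : forall n R, exists m w, (n < m)%nat /\ (forall j, 0 <= w j) /\
    (forall j, (j < n \/ m <= j)%nat -> w j = 0) /\ (forall M, psum (fun j => rp (w j) p) M <= 1) /\ R < Phi m w).
 { intros n R. apply (block_lemma p Hp Phi).
   - intros m z w Hzw. unfold Phi. apply psum_ext. intros j Hj; rewrite Hzw; auto.
   - intros m z s Hs. unfold Phi. unfold Rdiv. rewrite Rmult_comm, <- psum_scal. apply psum_ext; intros; ring.
   - intros m n' z. unfold Phi. rewrite <- psum_plus. right. apply psum_ext; intros j _.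
     rewrite (trunc_tail_pt n' z j) at 1. ring.
   - intros n'. exists (psum (fun j => Rabs (a i j)) n'). intros m z Hz. unfold Phi.
     eapply Rle_trans. apply psum_le with (g := fun j => if lt_dec j n' then Rabs (a i j) * pnorm p m z else 0).
     intros j Hj. pose proof (trunc_le_pnorm n' m z j Hz Hj). pose proof (Rabs_pos (a i j)).
     destruct (lt_dec j n'). apply Rmult_le_compat_l; auto. eapply Rle_trans. apply RRle_abs. auto.
     unfold trunc. destruct (lt_dec j n'). lia. lra.
     eapply Rle_trans. apply psum_le_supp with (m := n'). intros j; destruct (lt_dec j n'). apply Rmult_le_pos. apply Rabs_pos. apply pnorm_nonneg. lra.
     intros j Hj; destruct (lt_dec j n'); auto; lia.
     rewrite (psum_ext _ (fun j => pnorm p m z * Rabs (a i j))). rewrite psum_scal. right; ring.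
     intros j Hj; destruct (lt_dec j n'); [ring|lia].
   - intros m z Hz. unfold Phi. rewrite psum_zero. lra. intros j Hj; rewrite Hz; auto; ring.
   - intros C HC. apply NNPP; intro Hc. apply Hneg. exists C. split. lra. intros w M Hw.
     apply Rnot_lt_le. intro Hlt. apply Hc. exists M, w. split; auto. }
 destruct (hump_build p (fun s c m w r' => c = (/ 2) ^ (sk s) /\ (INR (sk s) + 1) / c < Phi m w) 0%nat)
   as [cc [nn [rr [XX [ww [Hn0 [HX0 Hall]]]]]]].
 { intros s. set (c := (/ 2) ^ (sk s)). assert (Hc : 0 < c) by (apply pow_lt; lra).
   destruct (Hblk (sn s) ((INR (sk s) + 1) / c)) as [m [w [Hm [Hw0 [Hws [Hwn HR]]]]]].
   exists c, m, w, (sr s). split. repeat split; auto; unfold c; lra. split; auto. }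
 assert (Hblk' : forall k, blockok p k (nn k) (cc k) (nn (S k)) (ww k)) by apply Hall.
 assert (HXS : forall k, XX (S k) = (fun j => XX k j + cc k * ww k j)) by apply Hall.
 set (x := xh XX).
 assert (Hx0 : forall j, 0 <= x j) by (intros; eapply xh_nonneg; eauto).
 assert (Hxl : in_lp p x) by (eapply xh_lp; eauto).
 destruct (HH x Hx0 Hxl) as [Hrow _].
 set (Sr := Series (fun j => Rabs (a i j) * x j)).
 destruct (INR_unbounded Sr) as [k Hk].
 destruct (Hall k) as [_ [_ [_ [Hck HQ]]]]. simpl in HQ.
 assert (Hc : 0 < cc k) by (apply Hblk').
 assert (H1 : psum (fun j => Rabs (a i j) * x j) (nn (S k)) <= Sr).
 { apply psum_le_Series; auto. intros; apply Rmult_le_pos; auto. apply Rabs_pos. }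
 assert (H2 : cc k * Phi (nn (S k)) (ww k) <= psum (fun j => Rabs (a i j) * x j) (nn (S k))).
 { unfold Phi. rewrite <- psum_scal. apply psum_le. intros j _.
   pose proof (xh_ge_block p cc nn XX ww Hn0 HX0 Hblk' HXS k j). pose proof (Rabs_pos (a i j)).
   fold x in H. nra. }
 assert (H3 : INR k + 1 < cc k * Phi (nn (S k)) (ww k)).
 { apply Rmult_lt_reg_r with (/ cc k). apply Rinv_0_lt_compat; auto.
   rewrite (Rmult_comm (cc k)), Rmult_assoc, Rinv_r, Rmult_1_r by lra. exact HQ. }
 lra. Qed.

Hypothesis Hsup : exists B, forall j, N (col a j) <= B.

Lemma H_Bd : Bd N a p.
Proof. apply NNPP; intro Hnb. destruct Hsup as [B HB]. set (B' := Rmax B 0).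
 assert (HB' : forall j, N (col a j) <= B') by (intros; eapply Rle_trans; [apply HB|apply Rmax_l]).
 assert (HB0 : 0 <= B') by apply Rmax_r.
 set (Phi := fun m z => N (Tm a m z)).
 assert (Hblk : forall n R, exists m w, (n < m)%nat /\ (forall j, 0 <= w j) /\
    (forall j, (j < n \/ m <= j)%nat -> w j = 0) /\ (forall M, psum (fun j => rp (w j) p) M <= 1) /\ R < Phi m w).
 { intros n R. apply (block_lemma p Hp Phi).
   - intros m z w Hzw. unfold Phi. rewrite (Tm_ext a m z w); auto.
   - intros m z s Hs. unfold Phi. rewrite (Tm_ext a m _ (fun j => / s * z j)) by (intros; unfold Rdiv; ring).
     rewrite Tm_scal. rewrite (N_scal L N HBFS) by (apply (Tm_L L N a HBFS Hcol)).
     rewrite Rabs_right by (apply Rle_ge; left; apply Rinv_0_lt_compat; auto). unfold Rdiv; ring.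
   - intros m n' z. unfold Phi. rewrite (Tm_ext a m z (fun j => trunc n' z j + tailv n' z j)) by (intros; apply trunc_tail_pt).
     rewrite Tm_add. apply (N_tri L N HBFS); apply (Tm_L L N a HBFS Hcol).
   - intros n'. exists (INR n' * B'). intros m z Hz. unfold Phi.
     eapply Rle_trans. apply (N_Tm_le L N a HBFS Hcol).
     eapply Rle_trans. apply psum_le with (g := fun j => if lt_dec j n' then pnorm p m z * B' else 0).
     intros j Hj. pose proof (trunc_le_pnorm n' m z j Hz Hj). pose proof (HB' j). pose proof (Rabs_pos (trunc n' z j)).
     destruct (lt_dec j n'). apply Rmult_le_compat; auto. apply (N_nonneg L N HBFS); auto.
     unfold trunc in *. destruct (lt_dec j n'). lia. rewrite Rabs_R0. lra.
     eapply Rle_trans. apply psum_ind_le. apply Rmult_le_pos; auto. apply pnorm_nonneg. right; ring.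
   - intros m z Hz. unfold Phi. replace (Tm a m z) with seq_zero. rewrite (N_zero L N HBFS). lra.
     apply functional_extensionality; intro i. rewrite Tm_apply. rewrite psum_zero. reflexivity. intros j Hj; rewrite Hz; auto; ring.
   - intros C HC. apply NNPP; intro Hc. apply Hnb. exists C. split. lra. intros m z Hz.
     apply Rnot_lt_le. intro Hlt. apply Hc. exists m, z. split; auto. }
 assert (HD : forall i, exists D, 0 <= D /\ forall w M, (forall j, 0 <= w j) ->
     psum (fun j => Rabs (a i j) * w j) M <= D * pnorm p M w) by apply row_bound.
 apply choice in HD. destruct HD as [D HD].
 set (E := fun r => psum (fun i => N (ee i) * D i) r).
 assert (HE0 : forall r, 0 <= E r).
 { intros r; apply psum_nonneg. intros i. apply Rmult_le_pos. left; apply (Ne_pos L N HBFS Hl1). apply HD. }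
 assert (HEm : forall r r', (r <= r')%nat -> E r <= E r').
 { intros. apply psum_mono; auto. intros i. apply Rmult_le_pos. left; apply (Ne_pos L N HBFS Hl1). apply HD. }
 destruct (hump_build p (fun s c m w r' => c = (/ 2) ^ (sk s) / (1 + E (sr s)) /\
     N (Tm a (sn s) (sX s)) + 1 + INR (sk s) < c * N (WW r' (Tm a m w))) 0%nat)
   as [cc [nn [rr [XX [ww [Hn0 [HX0 Hall]]]]]]].
 { intros s. set (c := (/ 2) ^ (sk s) / (1 + E (sr s))).
   assert (Hc : 0 < c). { unfold c. apply Rdiv_lt_0_compat. apply pow_lt; lra. pose proof (HE0 (sr s)); lra. }
   assert (Hc2 : c <= (/ 2) ^ (sk s)).
   { unfold c. pose proof (HE0 (sr s)). pose proof (pow_lt (/2) (sk s) ltac:(lra)). 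
     unfold Rdiv. rewrite <- (Rmult_1_r ((/ 2) ^ (sk s))) at 2. apply Rmult_le_compat_l. lra.
     rewrite <- Rinv_1. apply Rinv_le_contravar; lra. }
   set (P := N (Tm a (sn s) (sX s))).
   destruct (Hblk (sn s) ((P + 2 + INR (sk s)) / c)) as [m [w [Hm [Hw0 [Hws [Hwn HR]]]]]].
   destruct (N_WW_lim L N HBFS Hl1 HF (Tm a m w) (/ c)) as [r'' Hr''].
   apply (Tm_L L N a HBFS Hcol). apply Rinv_0_lt_compat; auto.
   exists c, m, w, (max (sr s) r''). split. repeat split; auto. split. lia. split. reflexivity.
   pose proof (N_WW_mono L N HBFS Hl1 r'' (max (sr s) r'') (Tm a m w) ltac:(lia)).
   unfold Phi in HR.
   assert (c * ((P + 2 + INR (sk s)) / c - / c) < c * N (WW (max (sr s) r'') (Tm a m w))).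
   { apply Rmult_lt_compat_l; auto. lra. }
   replace (c * ((P + 2 + INR (sk s)) / c - / c)) with (P + 1 + INR (sk s)) in H0 by (field; lra). exact H0. }
 assert (Hblk' : forall k, blockok p k (nn k) (cc k) (nn (S k)) (ww k)) by apply Hall.
 assert (HXS : forall k, XX (S k) = (fun j => XX k j + cc k * ww k j)) by apply Hall.
 assert (Hrr : forall k l, (k <= l)%nat -> (rr k <= rr l)%nat).
 { intros k l H. induction H. lia. pose proof (proj1 (proj2 (Hall m))). lia. }
 set (x := xh XX).
 assert (Hx0 : forall j, 0 <= x j) by (intros; eapply xh_nonneg; eauto).
 assert (Hxl : in_lp p x) by (eapply xh_lp; eauto).
 destruct (HH x Hx0 Hxl) as [Hrow HyL].
 set (y := Mapp a x).
 destruct (INR_unbounded (N y)) as [k Hk].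
 destruct (Hall k) as [_ [_ [_ [Hck HQ]]]]. simpl in Hck, HQ.
 set (r := rr (S k)). set (m := nn (S k)). set (t := / (1 + E r)).
 assert (Ht0 : 0 < t) by (unfold t; apply Rinv_0_lt_compat; pose proof (HE0 r); lra).
 assert (HtE : t * E r <= 1).
 { unfold t. pose proof (HE0 r). apply Rmult_le_reg_l with (1 + E r). lra.
   rewrite <- Rmult_assoc, Rinv_r, Rmult_1_l by lra. lra. }
 set (Y := Tm a m (XX (S k))).
 assert (Hdiff : forall i, Rabs (Y i - y i) <= D i * t * (/ 2) ^ k).
 { intros i. 
   assert (Hw : forall l M, psum (fun j => Rabs (a i j) * ww l j) M <= D i).
   { intros l M. eapply Rle_trans. apply HD. intros; apply Hblk'.
     assert (pnorm p M (ww l) <= 1).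
     { unfold pnorm. rewrite <- (rp_one (/ p)). apply rp_mono. apply Rinv_0_lt_compat; lra.
       split. apply psum_nonneg; intros; apply rp_nonneg. apply Hblk'. }
     pose proof (proj1 (HD i)). rewrite <- (Rmult_1_r (D i)) at 2. apply Rmult_le_compat_l; auto. }
   assert (Hcl : forall l, (k < l)%nat -> cc l <= t * (/ 2) ^ l).
   { intros l Hl. destruct l. lia. destruct (Hall (S l)) as [_ [_ [_ [Hcl _]]]]. simpl in Hcl. 
     (* cc (S l) defined by rr (S l) *)
     rewrite Hcl. unfold Rdiv. rewrite Rmult_comm. apply Rmult_le_compat_r. left; apply pow_lt; lra.
     unfold t. apply Rinv_le_contravar. pose proof (HE0 r); lra. apply Rplus_le_compat_l. apply HEm. unfold r. apply Hrr. lia. }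
   pose proof (tail_bound p cc nn XX ww Hn0 Hblk' HXS (fun j => Rabs (a i j)) (D i) t k
     (fun j => Rabs_pos _) (proj1 (HD i)) (Rlt_le _ _ Ht0) Hw Hcl) as Htb.
   assert (Hge : forall j, XX (S k) j <= x j) by (intros; eapply xh_ge; eauto).
   assert (Hex1 : ex_series (fun j => a i j * x j)).
   { apply ex_series_Rabs. apply ex_series_extR with (fun j => Rabs (a i j) * x j); auto.
     intros; rewrite Rabs_mult, (Rabs_right (x _)); auto. apply Rle_ge; auto. }
   assert (HXz : forall j, (m <= j)%nat -> XX (S k) j = 0) by (intros; eapply XX_supp; eauto).
   assert (HY : Y i = Series (fun j => a i j * XX (S k) j)).
   { unfold Y. rewrite Tm_apply. rewrite (Series_fin _ m). apply psum_ext; intros; ring.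
     intros j Hj; rewrite HXz; auto; ring. }
   assert (Hex2 : ex_series (fun j => a i j * XX (S k) j)).
   { exists (psum (fun j => a i j * XX (S k) j) m). apply series_fin. intros j Hj; rewrite HXz; auto; ring. }
   assert (Hexd : ex_series (fun j => Rabs (a i j * (x j - XX (S k) j)))).
   { apply ex_series_leR with (fun j => Rabs (a i j) * x j); auto. intros j. split. apply Rabs_pos.
     rewrite Rabs_mult. pose proof (Hge j). assert (0 <= XX (S k) j) by (eapply XX_nonneg; eauto).
     rewrite (Rabs_right (x j - XX (S k) j)) by lra. apply Rmult_le_compat_l. apply Rabs_pos. lra. }
   assert (E1 : Y i - y i = - Series (fun j => a i j * (x j - XX (S k) j))).
   { assert (Hs : Series (fun j => a i j * (x j - XX (S k) j)) = Series (fun j => a i j * x j) - Series (fun j => a i j * XX (S k) j)).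
     { rewrite (Series_ext (fun j => a i j * (x j - XX (S k) j)) (fun j => a i j * x j + (-1) * (a i j * XX (S k) j))) by (intros; ring).
       rewrite Series_plus; auto. rewrite Series_scal_l. ring. apply ex_series_scalR; auto. }
     rewrite HY. unfold y, Mapp. rewrite Hs. ring. }
   rewrite E1, Rabs_Ropp. eapply Rle_trans. apply Series_Rabs; auto.
   apply Series_le_bound; auto. intros M. eapply Rle_trans. 2: apply (Htb M). right. apply psum_ext.
   intros j _. fold x. rewrite Rabs_mult. rewrite (Rabs_right (x j - _)); auto. pose proof (Hge j). lra. }
 assert (HYL : L Y) by apply (Tm_L L N a HBFS Hcol).
 set (d := fun i => Y i - y i).
 assert (EW : WW r Y = seq_add (WW r y) (WW r d)).
 { apply functional_extensionality; intro i. unfold WW, seq_add, d. destruct (lt_dec i r); ring. }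
 assert (Nd : N (WW r d) <= 1).
 { eapply Rle_trans. apply (N_WW_le L N HBFS Hl1).
   apply Rle_trans with (t * (/ 2) ^ k * E r).
   - unfold E. rewrite <- psum_scal. apply psum_le. intros i _. pose proof (Hdiff i). unfold d; cbv beta.
     pose proof (Ne_pos L N HBFS Hl1 i). replace (t * (/ 2) ^ k * (N (ee i) * D i)) with (D i * t * (/ 2) ^ k * N (ee i)) by ring.
     apply Rmult_le_compat_r; lra.
   - assert ((/ 2) ^ k <= 1). { rewrite <- (pow1 k). apply pow_incr. lra. }
     pose proof (pow_lt (/2) k ltac:(lra)). pose proof (HE0 r). 
     replace (t * (/ 2) ^ k * E r) with ((/ 2) ^ k * (t * E r)) by ring.
     assert (0 <= t * E r) by (apply Rmult_le_pos; lra). rewrite <- (Rmult_1_r 1). apply Rmult_le_compat; lra. }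
 assert (NY : N (WW r Y) <= N y + 1).
 { rewrite EW. eapply Rle_trans. apply (N_tri L N HBFS); apply (WW_L L N HBFS Hl1).
   pose proof (N_WW_L L N HBFS r y HyL). lra. }
 set (X := XX k). set (w := ww k). set (c := cc k).
 assert (Hc : 0 < c) by apply Hblk'.
 assert (EY : WW r Y = seq_add (WW r (Tm a m X)) (seq_scal c (WW r (Tm a m w)))).
 { apply functional_extensionality; intro i. unfold WW, seq_add, seq_scal, Y. rewrite HXS.
   rewrite (Tm_ext a m _ (fun j => X j + c * w j)) by auto. rewrite Tm_add, Tm_scal. unfold seq_add, seq_scal.
   destruct (lt_dec i r); ring. }
 assert (Esc : seq_scal c (WW r (Tm a m w)) = seq_add (WW r Y) (seq_scal (-1) (WW r (Tm a m X)))).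
 { rewrite EY. apply functional_extensionality; intro i. unfold seq_add, seq_scal. ring. }
 assert (N1 : c * N (WW r (Tm a m w)) <= N (WW r Y) + N (WW r (Tm a m X))).
 { rewrite <- (Rabs_right c) by lra. rewrite <- (N_scal L N HBFS) by apply (WW_L L N HBFS Hl1).
   rewrite Esc. apply (N_sub_tri L N HBFS); apply (WW_L L N HBFS Hl1). }
 assert (N2 : N (WW r (Tm a m X)) <= N (Tm a (nn k) X)).
 { rewrite (Tm_tail a (nn k) m X). apply (N_WW_L L N HBFS). apply (Tm_L L N a HBFS Hcol).
   intros; eapply XX_supp; eauto. apply Nat.lt_le_incl. apply Hblk'. }
 unfold X, c, w, m, r in *. lra. Qed.
End HARD.

Theorem proposition7p9
  (L : seqR -> Prop) (N : seqR -> R) (a : nat -> nat -> R) (p : R)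
  (HBFS : is_BFS L N) (HFatou : Fatou L N)
  (Hl1 : forall x, in_l1 x -> L x)
  (Hnz : forall j, exists i, a i j <> 0)
  (Hcol : forall j, L (col a j))
  (Hsup : exists B, forall j, N (col a j) <= B)
  (Hp : 1 < p) :
  let Pa :=
    (forall x, in_lp p x ->
       (forall i, ex_series (fun j => a i j * x j)) /\ L (Mapp a x)) /\
    (exists K, forall x, in_lp p x -> N (Mapp a x) <= K * lp_norm p x) in
  let Pb :=
    exists T : seqR -> seqR,
      (forall x y, in_lp p x -> in_lp p y -> T (seq_add x y) = seq_add (T x) (T y)) /\
      (forall c x, in_lp p x -> T (seq_scal c x) = seq_scal c (T x)) /\
      (forall x, in_lp p x -> L (T x)) /\
      (exists K, forall x, in_lp p x -> N (T x) <= K * lp_norm p x) /\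
      (forall x, in_l1 x -> T x = Mapp a x) in
  let Pc := forall x, in_lp p x -> in_l1m L N a x in
  let Pd := forall x, in_l1 x -> in_lrm L N a (/ p) x /\ in_l1m L N a x in
  let Pe :=
    exists C, 0 < C /\
      forall (F : list nat) (x : seqR), NoDup F -> (forall j, In j F -> 0 <= x j) ->
        N (fin_comb a F x) <= C * rp (fin_sum F (fun j => rp (x j) p)) (/ p) in
  (Pa <-> Pb) /\ (Pa <-> Pc) /\ (Pa <-> Pd) /\ (Pa <-> Pe).
Proof.
 assert (BdA : Bd N a p -> PA L N a p).
 { intros HB. destruct (Bd_a L N a p HBFS HFatou Hl1 Hcol Hp HB) as [K HK]. split.
   - intros x Hx. destruct (HK x Hx) as [H1 [H2 _]]. split; auto. intros i; apply ex_series_Rabs; auto.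
   - exists K. intros x Hx. apply HK; auto. }
 assert (HBd : Hh L a p -> Bd N a p).
 { intros HH. apply (H_Bd L N a p HBFS HFatou Hl1 Hcol Hp HH Hsup). }
 cbv zeta.
 split; [|split; [|split]].
 - split. apply a_b. apply (b_a L N a p HBFS Hl1 Hp).
 - split. apply (a_c L N a p HBFS Hcol Hp). intros HC. apply BdA, HBd. apply (c_H L N a p HBFS Hl1); auto.
 - split. apply (a_d L N a p HBFS Hcol Hp). intros HD. apply BdA, HBd. apply (d_H L N a p HBFS Hl1 Hp); auto.
 - split. apply (a_e L N a p). intros HE. apply BdA. apply e_Bd; auto.
Qed.
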